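(* Let $w,v\in\mathbb{C}$ and put $\tilde p(z)=w(1-e^z)+z$. As real $n\to\infty$, \begin{align*} S_n(w;v)&=(n+v)\int_{-2}^{0}e^{n\tilde p(z)}e^{vz}\,dz+O\!\left(e^{-n/2}\right)\qquad(\mathrm{Re}(w)\leq1),\\ T_n(w;v)&=(n+v)\int_{0}^{2}e^{n\tilde p(z)}e^{vz}\,dz+O\!\left(e^{-n/2}\right)\qquad(\mathrm{Re}(w)\geq1), \end{align*} with implied constants depending only on $w$ and $v$.
   Context: Principal logarithm branch (arguments in $(-\pi,\pi]$); $(nw)^{-(n+v)}=e^{-(n+v)\log n}e^{-(n+v)\log w}$, $z^{n+v}=e^{(n+v)\log z}$ for $z>0$. For real $n>0$ with $\mathrm{Re}(n+v)>-1$: $S_n(w;v)=1+nw\int_0^1 e^{nw(1-z)}z^{n+v}\,dz$ and, for $w\neq0$, $T_n(w;v)=e^{nw}(nw)^{-(n+v)}\Gamma(n+v+1)-S_n(w;v)$. *)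

(* Defs.v *)
From Stdlib Require Import Reals.
From Coquelicot Require Export Coquelicot.
Open Scope R_scope.
Open Scope C_scope.

Definition cexp (z : C) : C :=
  (exp (Re z) * cos (Im z), exp (Re z) * sin (Im z))%R.

(* principal argument, values in (-PI, PI]; arg 0 := 0 *)
Definition Carg (z : C) : R :=
  let x := Re z in let y := Im z in
  if Rlt_dec 0 x then atan (y / x)
  else if Rlt_dec x 0 then
         (if Rle_dec 0 y then atan (y / x) + PI else atan (y / x) - PI)
  else if Rlt_dec 0 y then PI / 2
  else if Rlt_dec y 0 then - (PI / 2)
  else 0.

Definition Clog (z : C) : C := (ln (Cmod z), Carg z).

(* z^s for real z > 0 (set to 0 at z <= 0, a null set for the integrals) *)
Definition rpowC (z : R) (s : C) : C :=
  if Rlt_dec 0 z then cexp (s * RtoC (ln z)) else 0.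

Definition CGamma (s : C) : C :=
  RInt_gen (V := C_R_CompleteNormedModule)
    (fun t => rpowC t (s - 1) * RtoC (exp (- t)))
    (at_right 0) (Rbar_locally p_infty).

Definition CInt (f : R -> C) (a b : R) : C :=
  RInt (V := C_R_CompleteNormedModule) f a b.

Definition S_n (n : R) (w v : C) : C :=
  1 + RtoC n * w *
      CInt (fun z => cexp (RtoC n * w * RtoC (1 - z)) * rpowC z (RtoC n + v)) 0 1.

(* T_n(w;v) = e^{nw} (nw)^{-(n+v)} Gamma(n+v+1) - S_n(w;v),
   with (nw)^{-(n+v)} = e^{-(n+v) log n} e^{-(n+v) log w} *)
Definition T_n (n : R) (w v : C) : C :=
  cexp (RtoC n * w)
  * cexp (- (RtoC n + v) * RtoC (ln n)) * cexp (- (RtoC n + v) * Clog w)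
  * CGamma (RtoC n + v + 1) - S_n n w v.

Definition ptilde (w : C) (z : R) : C := w * (1 - RtoC (exp z)) + RtoC z.

Definition integrand (n : R) (w v : C) (z : R) : C :=
  cexp (RtoC n * ptilde w z) * cexp (v * RtoC z).

(* Main.v *)
Require Import Defs.
From Stdlib Require Import Reals Lra.
From Coquelicot Require Import Coquelicot.
Open Scope R_scope.
Open Scope C_scope.

Definition CD (f : R -> C) (x : R) (l : C) := @is_derive R_AbsRing C_R_NormedModule f x l.

Lemma CD_pair (f : R -> C) x l :
  is_derive (fun t => fst (f t)) x (fst l) ->
  is_derive (fun t => snd (f t)) x (snd l) -> CD f x l.
Proof.
  intros H1 H2. unfold CD.
  eapply filterdiff_ext_lin.
  - eapply filterdiff_ext.
    2: { apply (filterdiff_comp_2 (fun t => fst (f t)) (fun t => snd (f t)) (fun a b => (a,b)) _ _ (fun a b => (a,b)) H1 H2).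
         apply filterdiff_linear. apply (is_linear_prod (fun t : prod_NormedModule R_AbsRing R_NormedModule R_NormedModule => fst t) (fun t : prod_NormedModule R_AbsRing R_NormedModule R_NormedModule => snd t)); [apply is_linear_fst|apply is_linear_snd]. }
    intros y. simpl. destruct (f y); reflexivity.
  - intros y. simpl. destruct l. reflexivity.
Qed.

Lemma CD_fst (f : R -> C) x l : CD f x l -> is_derive (fun t => fst (f t)) x (fst l).
Proof.
  intros H. unfold is_derive.
  eapply filterdiff_ext_lin.
  apply (filterdiff_comp' f (fun t : C_R_NormedModule => fst t) x _ (fun t : C_R_NormedModule => fst t) H).
  apply filterdiff_linear. apply (is_linear_fst (U:=R_NormedModule) (V:=R_NormedModule)).
  intros y. reflexivity.
Qed.

Lemma CD_snd (f : R -> C) x l : CD f x l -> is_derive (fun t => snd (f t)) x (snd l).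
Proof.
  intros H. unfold is_derive.
  eapply filterdiff_ext_lin.
  apply (filterdiff_comp' f (fun t : C_R_NormedModule => snd t) x _ (fun t : C_R_NormedModule => snd t) H).
  apply filterdiff_linear. apply (is_linear_snd (U:=R_NormedModule) (V:=R_NormedModule)).
  intros y. reflexivity.
Qed.

Lemma rd_eq (f : R -> R) x l l' : is_derive f x l -> l = l' -> is_derive f x l'.
Proof. intros H ->; exact H. Qed.

Lemma rd_mult (f g : R -> R) x df dg : is_derive f x df -> is_derive g x dg ->
  is_derive (fun t => f t * g t)%R x (df * g x + f x * dg)%R.
Proof. intros. apply (is_derive_mult f g x df dg); auto. intros; apply Rmult_comm. Qed.

Lemma rd_plus (f g : R -> R) x df dg : is_derive f x df -> is_derive g x dg ->
  is_derive (fun t => f t + g t)%R x (df + dg)%R.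
Proof. intros. apply (is_derive_plus f g x df dg); auto. Qed.

Lemma rd_minus (f g : R -> R) x df dg : is_derive f x df -> is_derive g x dg ->
  is_derive (fun t => f t - g t)%R x (df - dg)%R.
Proof. intros. apply (is_derive_minus f g x df dg); auto. Qed.

Lemma rd_exp (f : R -> R) x df : is_derive f x df ->
  is_derive (fun t => exp (f t)) x (df * exp (f x))%R.
Proof.
  intros H. apply (is_derive_comp exp f x (exp (f x)) df); auto.
  apply is_derive_Reals. apply derivable_pt_lim_exp.
Qed.

Lemma rd_cos (f : R -> R) x df : is_derive f x df ->
  is_derive (fun t => cos (f t)) x (df * - sin (f x))%R.
Proof.
  intros H. apply (is_derive_comp cos f x (- sin (f x))%R df); auto.
  apply is_derive_Reals. apply derivable_pt_lim_cos.
Qed.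

Lemma rd_sin (f : R -> R) x df : is_derive f x df ->
  is_derive (fun t => sin (f t)) x (df * cos (f x))%R.
Proof.
  intros H. apply (is_derive_comp sin f x (cos (f x)) df); auto.
  apply is_derive_Reals. apply derivable_pt_lim_sin.
Qed.

Lemma rd_const (c : R) (x : R) : is_derive (fun _ => c) x 0%R.
Proof. apply (is_derive_const (K:=R_AbsRing) (V:=R_NormedModule) c x). Qed.

Lemma CD_eq f x l l' : CD f x l -> l = l' -> CD f x l'.
Proof. intros H ->; exact H. Qed.

Lemma CD_ext f g x l : (forall t, f t = g t) -> CD f x l -> CD g x l.
Proof. intros E H. unfold CD. eapply is_derive_ext; [exact E| exact H]. Qed.

Lemma CD_RtoC (f : R -> R) x l : is_derive f x l -> CD (fun t => RtoC (f t)) x (RtoC l).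
Proof.
  intros H. apply CD_pair; simpl. exact H. apply rd_const.
Qed.

Lemma CD_const (c : C) x : CD (fun _ => c) x 0.
Proof. apply CD_pair; simpl; apply rd_const. Qed.

Lemma CD_id x : CD (fun t => RtoC t) x 1.
Proof. apply CD_RtoC. apply (is_derive_id (K:=R_AbsRing) x). Qed.

Lemma CD_mult f g x df dg : CD f x df -> CD g x dg ->
  CD (fun t => f t * g t) x (df * g x + f x * dg).
Proof.
  intros Hf Hg.
  pose proof (CD_fst _ _ _ Hf) as f1. pose proof (CD_snd _ _ _ Hf) as f2.
  pose proof (CD_fst _ _ _ Hg) as g1. pose proof (CD_snd _ _ _ Hg) as g2.
  apply CD_pair; simpl.
  - eapply rd_eq. apply rd_minus; apply rd_mult; eauto.
    destruct df, dg, (f x), (g x); simpl; ring.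
  - eapply rd_eq. apply rd_plus; apply rd_mult; eauto.
    destruct df, dg, (f x), (g x); simpl; ring.
Qed.

Lemma CD_plus f g x df dg : CD f x df -> CD g x dg ->
  CD (fun t => f t + g t) x (df + dg).
Proof.
  intros Hf Hg.
  pose proof (CD_fst _ _ _ Hf) as f1. pose proof (CD_snd _ _ _ Hf) as f2.
  pose proof (CD_fst _ _ _ Hg) as g1. pose proof (CD_snd _ _ _ Hg) as g2.
  apply CD_pair; simpl; apply rd_plus; auto.
Qed.

Lemma CD_minus f g x df dg : CD f x df -> CD g x dg ->
  CD (fun t => f t - g t) x (df - dg).
Proof.
  intros Hf Hg.
  pose proof (CD_fst _ _ _ Hf) as f1. pose proof (CD_snd _ _ _ Hf) as f2.
  pose proof (CD_fst _ _ _ Hg) as g1. pose proof (CD_snd _ _ _ Hg) as g2.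
  apply CD_pair; simpl; apply rd_minus; auto.
Qed.

Lemma CD_cexp f x df : CD f x df -> CD (fun t => cexp (f t)) x (df * cexp (f x)).
Proof.
  intros Hf.
  pose proof (CD_fst _ _ _ Hf) as f1. pose proof (CD_snd _ _ _ Hf) as f2.
  unfold cexp. apply CD_pair; simpl.
  - eapply rd_eq. apply rd_mult. apply rd_exp; eauto. apply rd_cos; eauto.
    destruct df, (f x); simpl; ring.
  - eapply rd_eq. apply rd_mult. apply rd_exp; eauto. apply rd_sin; eauto.
    destruct df, (f x); simpl; ring.
Qed.

Lemma CD_scal (c : C) f x df : CD f x df -> CD (fun t => c * f t) x (c * df).
Proof.
  intros H. eapply CD_eq. apply CD_mult. apply CD_const. exact H.
  destruct c, df, (f x); apply injective_projections; simpl; ring.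
Qed.

Lemma CD_cont f x l : CD f x l -> continuous f x.
Proof. intros H. apply (ex_derive_continuous (K:=R_AbsRing) (V:=C_R_NormedModule)). exists l. exact H. Qed.


Lemma normC (z : C) : @norm R_AbsRing C_R_NormedModule z = Cmod z.
Proof.
  destruct z as [x y]. unfold Cmod. unfold norm. simpl. unfold prod_norm. simpl.
  unfold norm; simpl. unfold abs; simpl. f_equal. rewrite !Rmult_1_r, <- !Rabs_mult, !Rabs_right; try nra; ring.
Qed.

Lemma Cmod_le_sum (z : C) : (Cmod z <= Rabs (fst z) + Rabs (snd z))%R.
Proof.
  destruct z as [x y]. unfold Cmod; simpl.
  pose proof (Rabs_pos x); pose proof (Rabs_pos y).
  apply Rsqr_incr_0_var.
  - rewrite Rsqr_sqrt by nra. unfold Rsqr.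
    pose proof (Rsqr_abs x); pose proof (Rsqr_abs y). unfold Rsqr in *. nra.
  - lra.
Qed.

Lemma im_le_Cmod (z : C) : (Rabs (snd z) <= Cmod z)%R.
Proof. pose proof (Rmax_Cmod z). pose proof (Rmax_r (Rabs (fst z)) (Rabs (snd z))). lra. Qed.

Lemma fst_le_Cmod (z : C) : (Rabs (fst z) <= Cmod z)%R.
Proof. pose proof (Rmax_Cmod z). pose proof (Rmax_l (Rabs (fst z)) (Rabs (snd z))). lra. Qed.

Lemma rd_cont_pt (f : R -> R) x l : is_derive f x l -> continuity_pt f x.
Proof.
  intros H. apply continuity_pt_filterlim.
  apply (ex_derive_continuous (K:=R_AbsRing) (V:=R_NormedModule)). exists l; exact H.
Qed.

Lemma MVI (f f' : R -> C) a b B :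
  (forall p, Rmin a b <= p <= Rmax a b -> CD f p (f' p)) ->
  (forall p, Rmin a b <= p <= Rmax a b -> Cmod (f' p) <= B) ->
  Cmod (f b - f a) <= 2 * B * Rabs (b - a).
Proof.
  intros Hd Hb.
  destruct (MVT_gen (fun t => fst (f t)) a b (fun t => fst (f' t))) as [c1 [Hc1 E1]].
  { intros x Hx. apply CD_fst. apply Hd. lra. }
  { intros x Hx. eapply rd_cont_pt. apply CD_fst. apply Hd. lra. }
  destruct (MVT_gen (fun t => snd (f t)) a b (fun t => snd (f' t))) as [c2 [Hc2 E2]].
  { intros x Hx. apply CD_snd. apply Hd. lra. }
  { intros x Hx. eapply rd_cont_pt. apply CD_snd. apply Hd. lra. }
  eapply Rle_trans. apply Cmod_le_sum.
  replace (fst (f b - f a)) with (fst (f b) - fst (f a))%R by (simpl; ring).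
  replace (snd (f b - f a)) with (snd (f b) - snd (f a))%R by (simpl; ring).
  rewrite E1, E2, !Rabs_mult.
  pose proof (fst_le_Cmod (f' c1)). pose proof (im_le_Cmod (f' c2)).
  pose proof (Hb c1 Hc1). pose proof (Hb c2 Hc2). pose proof (Rabs_pos (b-a)).
  nra.
Qed.

Lemma minus_C (x y : C_R_NormedModule) : minus x y = (x - y)%C.
Proof. reflexivity. Qed.
Lemma plus_C (x y : C_R_NormedModule) : plus x y = (x + y)%C.
Proof. reflexivity. Qed.
Lemma scal_C (r : R) (z : C_R_NormedModule) : scal r z = (RtoC r * z)%C.
Proof. destruct z as [a b]. apply injective_projections; simpl; change (scal r ?x) with (r * x)%R; ring. Qed.

Lemma cexp_add a b : cexp (a + b) = cexp a * cexp b.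
Proof.
  destruct a as [a1 a2], b as [b1 b2]. unfold cexp; simpl.
  rewrite exp_plus, cos_plus, sin_plus.
  apply injective_projections; simpl; ring.
Qed.

Lemma Cmod_cexp z : Cmod (cexp z) = exp (fst z).
Proof.
  destruct z as [a b]. unfold cexp, Cmod; simpl.
  replace (exp a * cos b * (exp a * cos b * 1) + exp a * sin b * (exp a * sin b * 1))%R
    with (exp a * exp a * (Rsqr (sin b) + Rsqr (cos b)))%R by (unfold Rsqr; ring).
  rewrite sin2_cos2, Rmult_1_r. apply sqrt_square. left; apply exp_pos.
Qed.

Lemma cexp_0 : cexp 0 = 1.
Proof. unfold cexp; simpl. rewrite exp_0, cos_0, sin_0. apply injective_projections; simpl; ring. Qed.

Lemma cexp_R (r : R) : cexp (RtoC r) = RtoC (exp r).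
Proof. unfold cexp; simpl. rewrite cos_0, sin_0. apply injective_projections; simpl; ring. Qed.

Lemma rpowC_pos x s : (0 < x)%R -> rpowC x s = cexp (s * RtoC (ln x)).
Proof. intros H. unfold rpowC. destruct (Rlt_dec 0 x); [reflexivity| lra]. Qed.

Lemma rpowC_nonpos x s : (x <= 0)%R -> rpowC x s = 0.
Proof. intros H. unfold rpowC. destruct (Rlt_dec 0 x); [lra| reflexivity]. Qed.

Lemma Cmod_rpowC x s : (0 < x)%R -> Cmod (rpowC x s) = exp (fst s * ln x).
Proof. intros H. rewrite rpowC_pos by auto. rewrite Cmod_cexp. destruct s; simpl; f_equal; ring. Qed.

Lemma cexp_ln x : (0 < x)%R -> cexp (RtoC (ln x)) = RtoC x.
Proof. intros H. rewrite cexp_R, exp_ln; auto. Qed.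

Lemma Cmod_RtoC_pos (r : R) : (0 <= r)%R -> Cmod (RtoC r) = r.
Proof. intros H. rewrite Cmod_R. apply Rabs_right. lra. Qed.


Lemma pointwise_taylor (g d d2 : R -> R -> C) (φ0 M y x : R) :
  (forall φ, Rabs (φ - φ0) < 1 -> CD (fun p => g p x) φ (d φ x)) ->
  (forall φ, Rabs (φ - φ0) < 1 -> CD (fun p => d p x) φ (d2 φ x)) ->
  (forall φ, Rabs (φ - φ0) < 1 -> Cmod (d2 φ x) <= M) ->
  Rabs (y - φ0) < 1 ->
  Cmod (g y x - g φ0 x - RtoC (y - φ0) * d φ0 x) <= 4 * M * (Rabs (y - φ0))^2.
Proof.
  intros Hg Hd Hb Hy.
  set (k := fun p => g p x - RtoC p * d φ0 x).
  assert (Hk : forall p, Rmin φ0 y <= p <= Rmax φ0 y -> CD k p (d p x - d φ0 x)).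
  { intros p Hp. unfold k. eapply CD_eq. apply CD_minus. apply Hg.
    - unfold Rmin, Rmax in Hp; destruct (Rle_dec φ0 y); apply Rabs_def1; apply Rabs_def2 in Hy; lra.
    - apply CD_mult. apply CD_id. apply CD_const.
    - apply injective_projections; simpl; ring. }
  assert (Hk' : forall p, Rmin φ0 y <= p <= Rmax φ0 y -> Cmod (d p x - d φ0 x) <= 2 * M * Rabs (y - φ0)).
  { intros p Hp.
    assert (Hpy : Rabs (p - φ0) <= Rabs (y - φ0)).
    { unfold Rmin, Rmax in Hp; destruct (Rle_dec φ0 y);
      unfold Rabs; destruct (Rcase_abs (p - φ0)), (Rcase_abs (y - φ0)); lra. }
    eapply Rle_trans. apply (MVI (fun q => d q x) (fun q => d2 q x) φ0 p M).
    - intros q Hq. apply Hd.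
      unfold Rmin, Rmax in Hp, Hq; destruct (Rle_dec φ0 y), (Rle_dec φ0 p); apply Rabs_def2 in Hy; apply Rabs_def1; lra.
    - intros q Hq. apply Hb.
      unfold Rmin, Rmax in Hp, Hq; destruct (Rle_dec φ0 y), (Rle_dec φ0 p); apply Rabs_def2 in Hy; apply Rabs_def1; lra.
    - assert (0 <= M). { eapply Rle_trans. apply Cmod_ge_0. apply (Hb φ0). rewrite Rminus_diag, Rabs_R0; lra. }
      nra. }
  pose proof (MVI k (fun p => d p x - d φ0 x) φ0 y (2 * M * Rabs (y - φ0)) Hk Hk') as H.
  unfold k in H.
  replace (g y x - g φ0 x - RtoC (y - φ0) * d φ0 x) with
     (g y x - RtoC y * d φ0 x - (g φ0 x - RtoC φ0 * d φ0 x)).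
  2: { apply injective_projections; simpl; ring. }
  eapply Rle_trans. apply H. simpl. nra.
Qed.

Lemma param_deriv (g d d2 : R -> R -> C) (a b φ0 M : R) :
  a <= b ->
  (forall φ x, Rabs (φ - φ0) < 1 -> a <= x <= b -> CD (fun p => g p x) φ (d φ x)) ->
  (forall φ x, Rabs (φ - φ0) < 1 -> a <= x <= b -> CD (fun p => d p x) φ (d2 φ x)) ->
  (forall φ x, Rabs (φ - φ0) < 1 -> a <= x <= b -> Cmod (d2 φ x) <= M) ->
  (forall φ, Rabs (φ - φ0) < 1 -> ex_RInt (V:=C_R_CompleteNormedModule) (g φ) a b) ->
  ex_RInt (V:=C_R_CompleteNormedModule) (d φ0) a b ->
  CD (fun φ => CInt (g φ) a b) φ0 (CInt (d φ0) a b).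
Proof.
  intros Hab Hg Hd Hb Hig Hid.
  assert (HM : 0 <= M).
  { eapply Rle_trans. apply Cmod_ge_0. apply (Hb φ0 a). rewrite Rminus_diag, Rabs_R0; lra. lra. }
  unfold CD, is_derive, filterdiff. split. apply is_linear_scal_l.
  intros x0 Hx0. apply (is_filter_lim_locally_unique (K:=R_AbsRing) (V:=AbsRing_NormedModule R_AbsRing)) in Hx0. subst x0.
  intros eps.
  assert (Hδ : 0 < Rmin 1 (eps / (4 * M * (b - a) + 1))).
  { apply Rmin_pos. lra. apply Rdiv_lt_0_compat. apply cond_pos. nra. }
  exists (mkposreal _ Hδ). intros y Hy.
  change (ball φ0 (Rmin 1 (eps / (4 * M * (b - a) + 1))) y) in Hy.
  assert (Hy' : Rabs (y - φ0) < Rmin 1 (eps / (4 * M * (b - a) + 1))) by exact Hy.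
  clear Hy.
  assert (Hy1 : Rabs (y - φ0) < 1) by (eapply Rlt_le_trans; [exact Hy'| apply Rmin_l]).
  assert (Hy2 : Rabs (y - φ0) <= eps / (4 * M * (b - a) + 1)) by (left; eapply Rlt_le_trans; [exact Hy'| apply Rmin_r]).
  pose proof (RInt_correct _ _ _ (Hig y Hy1)) as I1.
  assert (H00 : Rabs (φ0 - φ0) < 1) by (rewrite Rminus_diag, Rabs_R0; lra).
  pose proof (RInt_correct _ _ _ (Hig φ0 H00)) as I0.
  pose proof (RInt_correct _ _ _ Hid) as Id.
  pose proof (is_RInt_minus _ _ _ _ _ _ (is_RInt_minus _ _ _ _ _ _ I1 I0) (is_RInt_scal _ _ _ (y - φ0) _ Id)) as Itot.
  unfold CInt.
  change (norm (minus y φ0)) with (Rabs (y - φ0)).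
  match type of Itot with is_RInt ?f _ _ _ =>
  assert (Hpt : forall x, a <= x <= b -> @norm R_AbsRing C_R_NormedModule (f x) <= 4 * M * (Rabs (y - φ0))^2) end.
  { intros x Hx. simpl. rewrite normC. rewrite scal_C. 
    apply (pointwise_taylor g d d2 φ0 M y x); auto. }
  eapply Rle_trans. apply (norm_RInt_le_const _ a b _ (4 * M * (Rabs (y - φ0))^2) Hab Hpt Itot).
  pose proof (Rabs_pos (y - φ0)).
  assert (HH : (4 * M * (b - a) * Rabs (y - φ0) <= eps)%R).
  { apply Rmult_le_compat_l with (r := (4 * M * (b - a))%R) in Hy2; [|nra].
    eapply Rle_trans. apply Hy2. unfold Rdiv.
    pose proof (cond_pos eps).
    apply Rle_trans with (eps * ((4 * M * (b - a)) * / (4 * M * (b - a) + 1)))%R. right; ring.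
    rewrite <- (Rmult_1_r eps) at 2. apply Rmult_le_compat_l. lra.
    apply Rmult_le_reg_r with (4 * M * (b - a) + 1)%R. nra.
    rewrite Rmult_assoc, Rinv_l by nra. nra. }
  simpl. nra.
Qed.


Lemma ball_C (z w : C) (eps : R) : (Cmod (w - z) < eps)%R -> @ball C_R_NormedModule z eps w.
Proof.
  intros H. split.
  - change (Rabs (fst w - fst z) < eps)%R. eapply Rle_lt_trans; [|exact H].
    replace (fst w - fst z)%R with (fst (w - z)) by (simpl; ring). apply fst_le_Cmod.
  - change (Rabs (snd w - snd z) < eps)%R. eapply Rle_lt_trans; [|exact H].
    replace (snd w - snd z)%R with (snd (w - z)) by (simpl; ring). apply im_le_Cmod.
Qed.

Lemma cont_C (f : R -> C) x :
  (forall eps : posreal, exists δ : posreal, forall y, (Rabs (y - x) < δ)%R -> (Cmod (f y - f x) < eps)%R) ->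
  @continuous R_UniformSpace C_R_NormedModule f x.
Proof.
  intros H. unfold continuous. apply (proj2 (filterlim_locally (U:=C_R_NormedModule) f (f x))). intros eps.
  destruct (H eps) as [δ Hδ]. exists δ. intros y Hy. apply ball_C. apply Hδ. exact Hy.
Qed.

Lemma cont0 (f : R -> C) C0 :
  f 0%R = 0 -> (forall y, (0 < Rabs y < 1)%R -> (Cmod (f y) <= C0 * Rabs y)%R) ->
  @continuous R_UniformSpace C_R_NormedModule f 0%R.
Proof.
  intros H0 Hb. apply cont_C. intros eps.
  assert (Hd : (0 < Rmin 1 (eps / (Rabs C0 + 1)))%R).
  { apply Rmin_pos. lra. apply Rdiv_lt_0_compat. apply cond_pos. pose proof (Rabs_pos C0); lra. }
  exists (mkposreal _ Hd). intros y Hy. simpl in Hy. rewrite H0.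
  replace (f y - 0) with (f y) by (apply injective_projections; simpl; ring).
  rewrite Rminus_0_r in Hy.
  destruct (Req_dec y 0) as [->|Hy0].
  - rewrite H0, Cmod_0. apply cond_pos.
  - assert (Hy1 : (0 < Rabs y < 1)%R). { split. apply Rabs_pos_lt; auto. eapply Rlt_le_trans; [exact Hy| apply Rmin_l]. }
    eapply Rle_lt_trans. apply Hb; auto.
    assert (Hy2 : (Rabs y < eps / (Rabs C0 + 1))%R) by (eapply Rlt_le_trans; [exact Hy| apply Rmin_r]).
    pose proof (Rabs_pos C0). pose proof (cond_pos eps).
    apply Rle_lt_trans with (Rabs C0 * Rabs y)%R. apply Rmult_le_compat_r. apply Rabs_pos. apply Rle_abs.
    apply Rle_lt_trans with ((Rabs C0 + 1) * Rabs y)%R. nra.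
    apply Rmult_lt_compat_l with (r := (Rabs C0 + 1)%R) in Hy2; [|lra].
    eapply Rlt_le_trans. exact Hy2. right. field. lra.
Qed.

Lemma exp_le x y : (x <= y)%R -> (exp x <= exp y)%R.
Proof. intros H. destruct H as [H|H]. left; apply exp_increasing; auto. right; subst; auto. Qed.

Lemma ln_le_sub1 x : (0 < x)%R -> (ln x <= x - 1)%R.
Proof. intros H. pose proof (exp_ineq1_le (ln x)). rewrite exp_ln in H0 by auto. lra. Qed.

Lemma rpowC_small y s : (0 < y < 1)%R -> (1 <= fst s)%R -> (Cmod (rpowC y s) <= y)%R.
Proof.
  intros Hy Hs. rewrite Cmod_rpowC by lra.
  rewrite <- (exp_ln y) at 2 by lra. apply exp_le.
  assert (ln y < 0)%R. { rewrite <- ln_1. apply ln_increasing; lra. }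
  nra.
Qed.

Lemma CDex_cont f x : (exists l, CD f x l) -> @continuous R_UniformSpace C_R_NormedModule f x.
Proof. intros [l H]. eapply CD_cont. exact H. Qed.


Lemma CD_ext_loc f g x l : locally x (fun t => f t = g t) -> CD f x l -> CD g x l.
Proof. intros H1 H2. unfold CD. eapply is_derive_ext_loc; eauto. Qed.

Lemma rd_ln x : (0 < x)%R -> is_derive ln x (/ x)%R.
Proof. intros H. apply is_derive_Reals. apply derivable_pt_lim_ln; auto. Qed.

Lemma CD_rpowC (s : C) x : (0 < x)%R -> CD (fun t => rpowC t s) x (s * RtoC (/ x) * rpowC x s).
Proof.
  intros Hx.
  apply CD_ext_loc with (f := fun t => cexp (s * RtoC (ln t))).
  { apply locally_interval with (a := Finite 0%R) (b := p_infty); simpl; auto.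
    intros y Hy _. rewrite rpowC_pos; auto. }
  rewrite rpowC_pos by auto.
  apply CD_cexp. apply CD_scal. apply CD_RtoC. apply rd_ln; auto.
Qed.

Lemma is_RInt_Cmult (c : C) (f : R -> C) a b (l : C) :
  is_RInt (V:=C_R_NormedModule) f a b l -> is_RInt (V:=C_R_NormedModule) (fun t => c * f t) a b (c * l).
Proof.
  intros H.
  pose proof (is_RInt_fct_extend_fst _ _ _ _ H) as H1.
  pose proof (is_RInt_fct_extend_snd _ _ _ _ H) as H2.
  simpl in H1, H2.
  replace (c * l) with ((fst c * fst l - snd c * snd l)%R, (fst c * snd l + snd c * fst l)%R)
    by (destruct c, l; reflexivity).
  apply (is_RInt_fct_extend_pair (U:=R_NormedModule) (V:=R_NormedModule)); simpl.
  - eapply is_RInt_ext. 2: apply (is_RInt_minus (V:=R_NormedModule) _ _ _ _ _ _ (is_RInt_scal _ _ _ (fst c) _ H1) (is_RInt_scal _ _ _ (snd c) _ H2)).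
    intros x _. simpl. reflexivity.
  - eapply is_RInt_ext. 2: apply (is_RInt_plus (V:=R_NormedModule) _ _ _ _ _ _ (is_RInt_scal _ _ _ (fst c) _ H2) (is_RInt_scal _ _ _ (snd c) _ H1)).
    intros x _. simpl. reflexivity.
Qed.


Definition Gf (n : R) (w v : C) (x : R) : C :=
  cexp (RtoC n * w * RtoC (1 - x)) * rpowC x (RtoC n + v).
Definition uu (n : R) (w v : C) (t : R) : C := RtoC n * ptilde w t + v * RtoC t.

Lemma integrand_uu n w v t : integrand n w v t = cexp (uu n w v t).
Proof. unfold integrand, uu. rewrite cexp_add. reflexivity. Qed.

Lemma rd_exp_id t : is_derive exp t (exp t).
Proof. eapply rd_eq. apply (rd_exp (fun x => x)). apply (is_derive_id (K:=R_AbsRing)). simpl. change (one * exp t = exp t)%R. unfold one; simpl. ring. Qed.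

Lemma CD_uu n w v t : CD (uu n w v) t ((RtoC n + v) - RtoC n * w * RtoC (exp t)).
Proof.
  unfold uu, ptilde. eapply CD_eq.
  apply CD_plus. apply CD_scal. apply CD_plus. apply CD_scal. apply CD_minus. apply CD_const.
  apply CD_RtoC. apply rd_exp_id. apply CD_id. apply CD_scal. apply CD_id.
  apply injective_projections; simpl; ring.
Qed.

Lemma Gf_exp n w v t : Gf n w v (exp t) = cexp (uu n w v t).
Proof.
  unfold Gf. rewrite rpowC_pos by apply exp_pos. rewrite ln_exp, <- cexp_add.
  f_equal. unfold uu, ptilde. apply injective_projections; simpl; ring.
Qed.

Lemma CD_Gf n w v x : (0 < x)%R -> exists l, CD (Gf n w v) x l.
Proof.
  intros Hx. eexists. unfold Gf. apply CD_mult. apply CD_cexp. apply CD_scal. apply CD_RtoC.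
  apply rd_minus. apply rd_const. apply (is_derive_id (K:=R_AbsRing)).
  apply CD_rpowC; auto.
Qed.

Lemma cont_Gf_pos n w v x : (0 < x)%R -> @continuous R_UniformSpace C_R_NormedModule (Gf n w v) x.
Proof. intros Hx. apply CDex_cont. apply CD_Gf; auto. Qed.

Lemma cont_integrand n w v t : @continuous R_UniformSpace C_R_NormedModule (integrand n w v) t.
Proof.
  apply CDex_cont. eexists. eapply CD_ext. intros x; symmetry; apply integrand_uu.
  apply CD_cexp. apply CD_uu.
Qed.

Lemma key_identity n w v α β :
  (RtoC n + v) * CInt (integrand n w v) α β =
  cexp (uu n w v β) - cexp (uu n w v α) + RtoC n * w * CInt (Gf n w v) (exp α) (exp β).
Proof.
  set (du := fun t => (RtoC n + v) - RtoC n * w * RtoC (exp t)).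
  assert (H3 : is_RInt (V:=C_R_NormedModule) (fun t => du t * cexp (uu n w v t)) α β
                       (minus (cexp (uu n w v β)) (cexp (uu n w v α)))).
  { apply (is_RInt_derive (V:=C_R_CompleteNormedModule) (fun t => cexp (uu n w v t))).
    - intros x _. apply CD_cexp. apply CD_uu.
    - intros x _. apply CDex_cont. eexists. apply CD_mult.
      unfold du. apply CD_minus. apply CD_const. apply CD_scal. apply CD_RtoC. apply rd_exp_id.
      apply CD_cexp. apply CD_uu. }
  assert (Hex : ex_RInt (V:=C_R_CompleteNormedModule) (integrand n w v) α β).
  { apply ex_RInt_continuous. intros; apply cont_integrand. }
  pose proof (is_RInt_Cmult (RtoC n + v) _ _ _ _ (RInt_correct _ _ _ Hex)) as H1.
  assert (H2 := is_RInt_comp (V:=C_R_CompleteNormedModule) (Gf n w v) exp exp α β).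
  assert (H2' : is_RInt (V:=C_R_NormedModule) (fun y => scal (exp y) (Gf n w v (exp y))) α β
      (RInt (V:=C_R_CompleteNormedModule) (Gf n w v) (exp α) (exp β))).
  { apply H2.
    - intros x _. apply cont_Gf_pos. apply exp_pos.
    - intros x _. split. apply rd_exp_id. apply continuity_pt_filterlim. eapply rd_cont_pt. apply rd_exp_id. }
  clear H2.
  pose proof (is_RInt_Cmult (RtoC n * w) _ _ _ _ H2') as H2.
  pose proof (is_RInt_minus (V:=C_R_NormedModule) _ _ _ _ _ _ H1 H2) as H4.
  assert (H5 : is_RInt (V:=C_R_NormedModule) (fun t => du t * cexp (uu n w v t)) α β
     (minus ((RtoC n + v) * RInt (V:=C_R_CompleteNormedModule) (integrand n w v) α β)
            (RtoC n * w * RInt (V:=C_R_CompleteNormedModule) (Gf n w v) (exp α) (exp β)))).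
  { eapply is_RInt_ext. 2: exact H4. intros x _. simpl.
    rewrite scal_C, Gf_exp, integrand_uu. unfold du. rewrite minus_C.
    apply injective_projections; simpl; ring. }
  apply (is_RInt_unique (V:=C_R_CompleteNormedModule)) in H3.
  apply (is_RInt_unique (V:=C_R_CompleteNormedModule)) in H5.
  rewrite H3 in H5. unfold CInt.
  set (X := RInt (V:=C_R_CompleteNormedModule) (integrand n w v) α β) in *.
  set (Y := RInt (V:=C_R_CompleteNormedModule) (Gf n w v) (exp α) (exp β)) in *.
  assert (H6 : cexp (uu n w v β) - cexp (uu n w v α) = (RtoC n + v) * X - RtoC n * w * Y) by exact H5.
  rewrite H6. apply injective_projections; simpl; ring.
Qed.


Lemma CInt_bound (f : R -> C) a b M : (a <= b)%R -> ex_RInt (V:=C_R_CompleteNormedModule) f a b ->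
  (forall x, (a <= x <= b)%R -> (Cmod (f x) <= M)%R) -> (Cmod (CInt f a b) <= (b - a) * M)%R.
Proof.
  intros Hab Hex Hb. rewrite <- normC. unfold CInt.
  apply (norm_RInt_le_const (V:=C_R_NormedModule) f a b _ M Hab).
  - intros x Hx. rewrite normC. apply Hb; auto.
  - apply (RInt_correct (V:=C_R_CompleteNormedModule)). auto.
Qed.

Lemma Cmod_cexp_Gpart n w x : Cmod (cexp (RtoC n * w * RtoC (1 - x))) = exp (n * fst w * (1 - x))%R.
Proof. rewrite Cmod_cexp. f_equal. destruct w; simpl; ring. Qed.

Lemma cont_Gf n w v x : (1 <= n + fst v)%R -> (0 <= x)%R ->
  @continuous R_UniformSpace C_R_NormedModule (Gf n w v) x.
Proof.
  intros Hs Hx. destruct Hx as [Hx|Hx]. apply cont_Gf_pos; auto. subst x.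
  apply (cont0 _ (exp (Rabs (n * fst w)))).
  - unfold Gf. rewrite rpowC_nonpos by lra. apply injective_projections; simpl; ring.
  - intros y Hy. destruct (Rle_dec y 0) as [Hy0|Hy0].
    + unfold Gf. rewrite rpowC_nonpos by lra.
      replace (cexp (RtoC n * w * RtoC (1 - y)) * 0) with (RtoC 0) by (apply injective_projections; simpl; ring).
      rewrite Cmod_0. apply Rmult_le_pos. left; apply exp_pos. apply Rabs_pos.
    + unfold Gf. rewrite Cmod_mult, Cmod_cexp_Gpart.
      assert (Hy1 : (0 < y < 1)%R). { rewrite Rabs_right in Hy; lra. }
      rewrite (Rabs_right y) by lra.
      apply Rmult_le_compat. left; apply exp_pos. apply Cmod_ge_0.
      apply exp_le. pose proof (Rle_abs (n * fst w)). pose proof (Rabs_pos (n * fst w)).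
      destruct (Rle_dec 0 (n * fst w)); nra.
      apply rpowC_small; [lra | simpl; lra].
Qed.

Lemma ex_RInt_Gf n w v a b : (1 <= n + fst v)%R -> (0 <= a)%R -> (0 <= b)%R ->
  ex_RInt (V:=C_R_CompleteNormedModule) (Gf n w v) a b.
Proof.
  intros Hs Ha Hb. apply ex_RInt_continuous. intros z Hz. apply cont_Gf; auto.
  destruct Hz as [Hz _]. eapply Rle_trans; [|exact Hz]. apply Rmin_glb; auto.
Qed.

Lemma uu0 n w v : uu n w v 0 = 0.
Proof. unfold uu, ptilde. rewrite exp_0. apply injective_projections; simpl; ring. Qed.

Lemma half_bound n : (0 <= n)%R -> (n * exp (- n) <= 2 * exp (- n / 2))%R.
Proof.
  intros Hn. pose proof (exp_ineq1_le (n/2)).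
  replace (exp (- n)) with (exp (- n / 2) * exp (- n / 2))%R by (rewrite <- exp_plus; f_equal; field).
  assert (exp (- n / 2) * exp (n / 2) = 1)%R by (rewrite <- exp_plus, <- exp_0; f_equal; field).
  pose proof (exp_pos (- n / 2)). pose proof (exp_pos (n/2)).
  nra.
Qed.

Theorem partS : forall w v : C, (Re w <= 1)%R ->
     exists K N : R, forall n : R, (N <= n)%R ->
       (Cmod (S_n n w v - (RtoC n + v) * CInt (integrand n w v) (-2) 0)
          <= K * exp (- n / 2))%R.
Proof.
  intros w v Hw.
  exists (exp (-2 * fst v) * (2 * Cmod w + 1))%R, (1 + Rabs (fst v))%R.
  intros n Hn.
  pose proof (Rle_abs (fst v)). pose proof (Rle_abs (- fst v)). rewrite Rabs_Ropp in *.
  assert (Hs : (1 <= n + fst v)%R) by lra.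
  assert (Hn0 : (0 < n)%R) by (pose proof (Rabs_pos (fst v)); lra).
  rewrite key_identity, exp_0, uu0, cexp_0.
  assert (He : (0 < exp (-2) < 1)%R). { split. apply exp_pos. rewrite <- exp_0. apply exp_increasing. lra. }
  assert (HS : S_n n w v = 1 + RtoC n * w * (CInt (Gf n w v) 0 (exp (-2)) + CInt (Gf n w v) (exp (-2)) 1)).
  { unfold S_n. f_equal. f_equal. unfold CInt.
    rewrite <- (RInt_Chasles (V:=C_R_CompleteNormedModule) _ 0 (exp (-2)) 1).
    reflexivity. apply ex_RInt_Gf; lra. apply ex_RInt_Gf; lra. }
  rewrite HS.
  replace (1 + RtoC n * w * (CInt (Gf n w v) 0 (exp (-2)) + CInt (Gf n w v) (exp (-2)) 1) -
     (1 - cexp (uu n w v (-2)) + RtoC n * w * CInt (Gf n w v) (exp (-2)) 1))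
    with (RtoC n * w * CInt (Gf n w v) 0 (exp (-2)) + cexp (uu n w v (-2)))
    by (apply injective_projections; simpl; ring).
  eapply Rle_trans. apply Cmod_triangle.
  rewrite Cmod_mult, Cmod_mult, Cmod_R, Rabs_right by lra.
  assert (HI : (Cmod (CInt (Gf n w v) 0 (exp (-2))) <= (exp (-2) - 0) * exp (- n - 2 * fst v))%R).
  { apply CInt_bound. lra. apply ex_RInt_Gf; lra.
    intros x Hx. destruct (Req_dec x 0) as [->|Hx0].
    - unfold Gf. rewrite rpowC_nonpos by lra.
      replace (cexp (RtoC n * w * RtoC (1 - 0)) * 0) with (RtoC 0) by (apply injective_projections; simpl; ring).
      rewrite Cmod_0. left; apply exp_pos.
    - unfold Gf. rewrite Cmod_mult, Cmod_cexp_Gpart, Cmod_rpowC by lra.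
      rewrite <- exp_plus. apply exp_le.
      assert (Hl : (ln x <= -2)%R). { rewrite <- (ln_exp (-2)). destruct (Req_dec x (exp (-2))) as [->|]. lra.
        left. apply ln_increasing; lra. }
      simpl. unfold Re in Hw.
      assert (fst w * (1 - x) <= 1)%R. { assert (0 <= (1 - x) * (1 - fst w) + x)%R by nra. nra. }
      assert (n * (fst w * (1 - x)) <= n)%R by nra.
      assert ((n + fst v) * ln x <= (n + fst v) * (-2))%R by nra.
      nra. }
  assert (HU : Cmod (cexp (uu n w v (-2))) = exp (n * (fst w * (1 - exp (-2)) - 2) - 2 * fst v)%R).
  { rewrite Cmod_cexp. f_equal. unfold uu, ptilde. simpl. ring. }
  rewrite HU.
  assert (HU2 : (exp (n * (fst w * (1 - exp (-2)) - 2) - 2 * fst v) <= exp (- n) * exp (-2 * fst v))%R).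
  { rewrite <- exp_plus. apply exp_le. unfold Re in Hw.
    assert (fst w * (1 - exp (-2)) <= 1)%R. { assert (0 <= (1 - exp (-2)) * (1 - fst w) + exp (-2))%R by nra. nra. }
    nra. }
  pose proof (half_bound n (Rlt_le _ _ Hn0)).
  replace (exp (- n - 2 * fst v)) with (exp (- n) * exp (-2 * fst v))%R in HI by (rewrite <- exp_plus; f_equal; ring).
  pose proof (Cmod_ge_0 w). pose proof (exp_pos (- n)). pose proof (exp_pos (-2 * fst v)).
  pose proof (exp_pos (- n / 2)).
  assert (exp (-n) <= exp (- n / 2))%R by (apply exp_le; lra).
  assert (n * Cmod w * Cmod (CInt (Gf n w v) 0 (exp (-2))) <= Cmod w * (n * exp (- n)) * exp (-2 * fst v))%R.
  { replace (Cmod w * (n * exp (- n)) * exp (-2 * fst v))%R with (n * Cmod w * (1 * (exp (- n) * exp (-2 * fst v))))%R by ring.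
    apply Rmult_le_compat_l. nra. eapply Rle_trans. exact HI. apply Rmult_le_compat_r. nra. lra. }
  assert (Cmod w * (n * exp (- n)) * exp (-2 * fst v) <= Cmod w * (2 * exp (- n / 2)) * exp (-2 * fst v))%R.
  { apply Rmult_le_compat_r. lra. apply Rmult_le_compat_l; lra. }
  assert (exp (- n) * exp (-2 * fst v) <= exp (- n / 2) * exp (-2 * fst v))%R.
  { apply Rmult_le_compat_r; lra. }
  nra.
Qed.


Lemma Carg_pos w : (0 < fst w)%R -> Carg w = atan (snd w / fst w).
Proof. intros H. unfold Carg. unfold Re, Im. destruct (Rlt_dec 0 (fst w)); [reflexivity| lra]. Qed.

Lemma Cmod_factor w : (0 < fst w)%R -> Cmod w = (fst w * sqrt (1 + Rsqr (snd w / fst w)))%R.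
Proof.
  intros H. destruct w as [x y]. simpl in *. unfold Cmod. simpl.
  replace (x * (x * 1) + y * (y * 1))%R with (Rsqr x * (1 + Rsqr (y / x)))%R by (unfold Rsqr; field; lra).
  rewrite sqrt_mult_alt by apply Rle_0_sqr. rewrite sqrt_Rsqr by lra. reflexivity.
Qed.

Lemma Cmod_cos_Carg w : (0 < fst w)%R -> (Cmod w * cos (Carg w) = fst w)%R.
Proof.
  intros H. rewrite Carg_pos, cos_atan, Cmod_factor by auto.
  assert (0 < sqrt (1 + Rsqr (snd w / fst w)))%R. { apply sqrt_lt_R0. pose proof (Rle_0_sqr (snd w / fst w)). lra. }
  field. lra.
Qed.

Lemma Cmod_sin_Carg w : (0 < fst w)%R -> (Cmod w * sin (Carg w) = snd w)%R.
Proof.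
  intros H. rewrite Carg_pos, sin_atan, Cmod_factor by auto.
  assert (0 < sqrt (1 + Rsqr (snd w / fst w)))%R. { apply sqrt_lt_R0. pose proof (Rle_0_sqr (snd w / fst w)). lra. }
  field. split; lra.
Qed.

Lemma Cmod_pos_re w : (0 < fst w)%R -> (0 < Cmod w)%R.
Proof. intros H. pose proof (fst_le_Cmod w). pose proof (Rle_abs (fst w)). lra. Qed.

Lemma cos_Carg_pos w : (0 < fst w)%R -> (0 < cos (Carg w))%R.
Proof.
  intros H. pose proof (Cmod_cos_Carg w H). pose proof (Cmod_pos_re w H).
  destruct (Rlt_le_dec 0 (cos (Carg w))); auto. nra.
Qed.

Lemma Carg_bound w : (0 < fst w)%R -> (- PI / 2 < Carg w < PI / 2)%R.
Proof. intros H. rewrite Carg_pos by auto. apply atan_bound. Qed.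

Lemma cos_Rabs z : cos (Rabs z) = cos z.
Proof. unfold Rabs. destruct (Rcase_abs z). apply cos_neg. reflexivity. Qed.

Lemma cos_between θ φ : (- PI / 2 < θ < PI / 2)%R -> (Rmin 0 θ <= φ <= Rmax 0 θ)%R -> (cos θ <= cos φ)%R.
Proof.
  intros Hθ Hφ. pose proof PI_RGT_0.
  rewrite <- (cos_Rabs θ), <- (cos_Rabs φ).
  apply cos_decr_1; try apply Rabs_pos;
  unfold Rmin, Rmax in Hφ; destruct (Rle_dec 0 θ); unfold Rabs; destruct (Rcase_abs θ), (Rcase_abs φ); lra.
Qed.


Lemma tail_bound (f : R -> C) b0 b C0 lam : (0 < lam)%R -> (b0 <= b)%R ->
  ex_RInt (V:=C_R_CompleteNormedModule) f b0 b ->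
  (forall t, (b0 <= t <= b)%R -> (Cmod (f t) <= C0 * exp (- lam * t))%R) ->
  (Cmod (CInt f b0 b) <= C0 / lam * exp (- lam * b0))%R.
Proof.
  intros Hl Hb Hex Hf.
  assert (HC : (0 <= C0)%R).
  { pose proof (Hf b0 (conj (Rle_refl _) Hb)). pose proof (Cmod_ge_0 (f b0)). pose proof (exp_pos (- lam * b0)).
    destruct (Rle_dec 0 C0); auto. nra. }
  set (F := fun t => (- (C0 / lam) * exp (- lam * t))%R).
  assert (HI : is_RInt (V:=R_NormedModule) (fun t => C0 * exp (- lam * t))%R b0 b (minus (F b) (F b0))).
  { apply (is_RInt_derive (V:=R_CompleteNormedModule) F).
    - intros x _. unfold F. eapply rd_eq. apply rd_mult. apply rd_const. apply rd_exp.
      apply rd_mult. apply rd_const. apply (is_derive_id (K:=R_AbsRing)).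
      simpl. change one with 1%R. field. lra.
    - intros x _. apply continuity_pt_filterlim. eapply rd_cont_pt.
      apply rd_mult. apply rd_const. apply rd_exp. apply rd_mult. apply rd_const. apply (is_derive_id (K:=R_AbsRing)). }
  rewrite <- normC. unfold CInt.
  eapply Rle_trans. apply (norm_RInt_le (V:=C_R_NormedModule) f (fun t => C0 * exp (- lam * t))%R b0 b _ _ Hb).
  - intros x Hx. rewrite normC. apply Hf; auto.
  - apply (RInt_correct (V:=C_R_CompleteNormedModule)); auto.
  - exact HI.
  - unfold F. change (minus ?x ?y) with (x - y)%R. pose proof (exp_pos (- lam * b)).
    assert (0 <= C0 / lam)%R by (apply Rdiv_le_0_compat; lra).
    assert (C0 / lam * exp (- lam * b) >= 0)%R by nra. 
    replace (- (C0 / lam) * exp (- lam * b) - - (C0 / lam) * exp (- lam * b0))%R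
      with (C0 / lam * exp (- lam * b0) - C0 / lam * exp (- lam * b))%R by ring. lra.
Qed.


Lemma ln_bound_lin σ t : (0 < σ)%R -> (0 < t)%R -> (σ * ln t <= t / 2 + σ * (ln (2 * σ) - 1))%R.
Proof.
  intros Hs Ht.
  assert (E : ln t = (ln (t / (2 * σ)) + ln (2 * σ))%R).
  { rewrite <- ln_mult. f_equal. field. lra. apply Rdiv_lt_0_compat; lra. lra. }
  pose proof (ln_le_sub1 (t / (2 * σ)) ltac:(apply Rdiv_lt_0_compat; lra)).
  rewrite E. replace (t / 2)%R with (σ * (t / (2 * σ)))%R by (field; lra). nra.
Qed.

Section Gam.
Variable s : C.
Hypothesis Hs : (1 <= fst s)%R.
Let f := fun t => rpowC t s * RtoC (exp (- t)).
Let σ := fst s.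
Let Cs := exp (σ * (ln (2 * σ) - 1)).

Lemma f_mod t : (0 < t)%R -> Cmod (f t) = exp (σ * ln t - t).
Proof. intros Ht. unfold f. rewrite Cmod_mult, Cmod_rpowC, Cmod_R, Rabs_right by (auto; left; apply exp_pos).
  rewrite <- exp_plus. f_equal. Qed.

Lemma f_b1 t : (0 < t <= 1)%R -> (Cmod (f t) <= 1)%R.
Proof.
  intros Ht. rewrite f_mod by lra. rewrite <- exp_0. apply exp_le.
  assert (ln t <= 0)%R. { rewrite <- ln_1. destruct (Req_dec t 1) as [->|]. lra. left; apply ln_increasing; lra. }
  unfold σ. nra.
Qed.

Lemma f_b2 t : (0 < t)%R -> (Cmod (f t) <= Cs * exp (- (1/2) * t))%R.
Proof.
  intros Ht. rewrite f_mod by lra. unfold Cs. rewrite <- exp_plus. apply exp_le.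
  pose proof (ln_bound_lin σ t ltac:(unfold σ; lra) Ht). lra.
Qed.

Lemma f_ex a b : (0 < a)%R -> (0 < b)%R -> ex_RInt (V:=C_R_CompleteNormedModule) f a b.
Proof.
  intros Ha Hb. apply ex_RInt_continuous. intros z Hz. apply CDex_cont. eexists.
  unfold f. apply CD_mult. apply CD_rpowC.
  { destruct Hz as [Hz _]. eapply Rlt_le_trans; [|exact Hz]. apply Rmin_glb_lt; auto. }
  apply CD_RtoC. apply rd_exp. apply (is_derive_opp (K:=R_AbsRing) (fun t => t)). apply (is_derive_id (K:=R_AbsRing)).
Qed.

Definition Fil := filter_prod (at_right 0) (Rbar_locally p_infty).

Lemma Gam_cauchy : cauchy (filtermap (fun ab : R * R => (CInt f (fst ab) (snd ab) : C_R_CompleteNormedModule)) Fil).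
Proof.
  intros eps. pose proof (cond_pos eps) as He.
  assert (HCs : (0 < Cs)%R) by apply exp_pos.
  set (a0 := Rmin (1/2) (eps / 4)).
  set (b0 := (2 * Rabs (ln (4 * Cs / eps)) + 1)%R).
  assert (Ha0 : (0 < a0 <= 1/2)%R). { split. apply Rmin_pos; lra. apply Rmin_l. }
  assert (Ha0' : (a0 <= eps / 4)%R) by apply Rmin_r.
  assert (Hb0 : (1 <= b0)%R) by (unfold b0; pose proof (Rabs_pos (ln (4 * Cs / eps))); lra).
  exists (CInt f a0 b0).
  unfold filtermap, Fil.
  exists (fun a => (0 < a < a0)%R) (fun b => (b0 < b)%R).
  - exists (mkposreal _ (proj1 Ha0)). intros y Hy Hy0. simpl in Hy.
    change (Rabs (y - 0) < a0)%R in Hy. rewrite Rminus_0_r, Rabs_right in Hy by lra. lra.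
  - exists b0. auto.
  - intros a b Ha Hb. simpl. apply ball_C.
    assert (E : CInt f a b - CInt f a0 b0 = CInt f a a0 + CInt f b0 b).
    { unfold CInt. rewrite <- (RInt_Chasles (V:=C_R_CompleteNormedModule) f a a0 b) by (apply f_ex; lra).
      rewrite <- (RInt_Chasles (V:=C_R_CompleteNormedModule) f a0 b0 b) by (apply f_ex; lra).
      rewrite !plus_C. change (plus ?x ?y) with (Cplus x y). apply injective_projections; simpl; ring. }
    rewrite E. eapply Rle_lt_trans. apply Cmod_triangle.
    assert (H1 : (Cmod (CInt f a a0) <= (a0 - a) * 1)%R).
    { apply CInt_bound. lra. apply f_ex; lra. intros x Hx. apply f_b1. lra. }
    assert (H2 : (Cmod (CInt f b0 b) <= Cs / (1/2) * exp (- (1/2) * b0))%R).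
    { apply tail_bound. lra. lra. apply f_ex; lra. intros t Ht. apply f_b2. lra. }
    assert (H3 : (exp (- (1/2) * b0) <= eps / (4 * Cs))%R).
    { replace (eps / (4 * Cs))%R with (exp (- ln (4 * Cs / eps)))%R.
      apply exp_le. unfold b0. pose proof (Rle_abs (ln (4 * Cs / eps))). lra.
      rewrite exp_Ropp, exp_ln. field. split; lra. apply Rdiv_lt_0_compat; lra. }
    assert (H4 : (Cs / (1/2) * exp (- (1/2) * b0) <= eps / 2)%R).
    { replace (eps / 2)%R with (Cs / (1/2) * (eps / (4 * Cs)))%R by (field; lra).
      apply Rmult_le_compat_l. apply Rdiv_le_0_compat; lra. exact H3. }
    lra.
Qed.

Lemma Gam_is : is_RInt_gen (V:=C_R_NormedModule) f (at_right 0) (Rbar_locally p_infty)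
   (lim (filtermap (fun ab : R * R => (CInt f (fst ab) (snd ab) : C_R_CompleteNormedModule)) Fil)).
Proof.
  set (FF := filtermap (fun ab : R * R => (CInt f (fst ab) (snd ab) : C_R_CompleteNormedModule)) Fil).
  assert (PF : ProperFilter FF).
  { apply filtermap_proper_filter. apply filter_prod_proper. }
  pose proof (complete_cauchy FF PF Gam_cauchy) as HC.
  intros P [eps HP].
  assert (Hpos : Fil (fun ab : R * R => 0 < fst ab /\ 0 < snd ab)%R).
  { exists (fun a => (0 < a)%R) (fun b => (0 < b)%R).
    - exists (mkposreal 1 Rlt_0_1). intros; auto.
    - exists 0%R. auto.
    - intros; simpl; auto. }
  assert (Hb : Fil (fun ab : R * R => ball (lim FF) eps (CInt f (fst ab) (snd ab) : C_R_CompleteNormedModule))) by exact (HC eps).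
  unfold filtermapi.
  apply (filter_imp (fun ab : R * R => ball (lim FF) eps (CInt f (fst ab) (snd ab) : C_R_CompleteNormedModule) /\ (0 < fst ab /\ 0 < snd ab)%R)).
  2: { apply filter_and; auto. }
  intros [a b] [H1 [H2 H3]]. simpl in *.
  exists (CInt f a b). split.
  - apply (RInt_correct (V:=C_R_CompleteNormedModule)). apply f_ex; auto.
  - apply HP. exact H1.
Qed.

End Gam.

Lemma CGamma_is (s1 : C) : (1 <= fst ((s1 - 1)%C))%R ->
  is_RInt_gen (V:=C_R_NormedModule) (fun t => rpowC t (s1 - 1) * RtoC (exp (- t))) (at_right 0) (Rbar_locally p_infty) (CGamma s1).
Proof.
  intros Hs. pose proof (Gam_is (s1 - 1) Hs) as H.
  unfold CGamma. rewrite (is_RInt_gen_unique (V:=C_R_CompleteNormedModule) _ _ H). exact H.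
Qed.


Definition ee (φ : R) : C := cexp (Ci * RtoC φ).

Lemma Cmod_ee φ : Cmod (ee φ) = 1%R.
Proof. unfold ee. rewrite Cmod_cexp. simpl. replace (0 * φ - 1 * 0)%R with 0%R by ring. apply exp_0. Qed.

Lemma ee_fst φ : fst (ee φ) = cos φ.
Proof. unfold ee, cexp. simpl. replace (0 * φ - 1 * 0)%R with 0%R by ring. replace (0 * 0 + 1 * φ)%R with φ by ring. rewrite exp_0. ring. Qed.

Lemma CD_ee φ : CD ee φ (Ci * ee φ).
Proof. unfold ee. eapply CD_eq. apply CD_cexp. apply CD_scal. apply CD_id. f_equal. ring. Qed.

Section Rot.
Variable s : C.
Variable ρ : R.
Hypothesis Hs : (1 <= fst s)%R.
Hypothesis Hρ : (0 < ρ)%R.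

Definition hh (φ x : R) : C :=
  cexp (Ci * (s + 1) * RtoC φ) * (rpowC x s * cexp (RtoC (- ρ * x) * ee φ)).
Definition qq (φ x : R) : C := Ci * (s + 1) + RtoC (- ρ * x) * (Ci * ee φ).
Definition dd (φ x : R) : C := qq φ x * hh φ x.
Definition dd2 (φ x : R) : C := RtoC (- ρ * x) * (Ci * (Ci * ee φ)) * hh φ x + qq φ x * dd φ x.

Lemma CD_hh_φ φ x : CD (fun p => hh p x) φ (dd φ x).
Proof.
  unfold hh, dd, qq. eapply CD_eq. apply CD_mult.
  apply CD_cexp. apply CD_scal. apply CD_id.
  apply CD_scal. apply CD_cexp. apply CD_scal. apply CD_ee.
  cbv beta. unfold hh. ring.
Qed.

Lemma CD_qq φ x : CD (fun p => qq p x) φ (RtoC (- ρ * x) * (Ci * (Ci * ee φ))).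
Proof.
  unfold qq. eapply CD_eq. apply CD_plus. apply CD_const. apply CD_scal. apply CD_scal. apply CD_ee. cbv beta. ring.
Qed.

Lemma CD_dd_φ φ x : CD (fun p => dd p x) φ (dd2 φ x).
Proof.
  unfold dd, dd2. eapply CD_eq. apply CD_mult. apply CD_qq. apply CD_hh_φ. cbv beta. unfold dd. ring.
Qed.

Lemma Cmod_hh φ x : (0 < x)%R ->
  Cmod (hh φ x) = (exp (- snd s * φ) * exp (fst s * ln x) * exp (- ρ * x * cos φ))%R.
Proof.
  intros Hx. unfold hh. rewrite !Cmod_mult, Cmod_rpowC by auto. rewrite !Cmod_cexp.
  rewrite Rmult_assoc. f_equal. f_equal. simpl. ring.
  f_equal. rewrite <- ee_fst. generalize (ee φ). intros [a b]. simpl. f_equal. ring.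
Qed.

Lemma CD_xhh φ x : (0 < x)%R -> CD (fun y => Ci * (RtoC y * hh φ y)) x (dd φ x).
Proof.
  intros Hx. unfold hh. eapply CD_eq. apply CD_scal. apply CD_mult. apply CD_id.
  apply CD_mult. apply CD_const. apply CD_mult. apply CD_rpowC; auto.
  apply CD_cexp. apply CD_mult. apply CD_RtoC. eapply rd_eq. apply rd_mult. apply rd_const.
  apply (is_derive_id (K:=R_AbsRing)). reflexivity. apply CD_const.
  unfold dd, qq, hh.
  assert (RtoC x <> 0). { intros E. apply (f_equal fst) in E. simpl in E. lra. }
  rewrite RtoC_inv by lra. change one with 1%R.
  replace (RtoC (0 * x + - ρ * 1)) with (RtoC (- ρ)) by (f_equal; ring).
  replace (RtoC (- ρ * x)) with (RtoC (- ρ) * RtoC x) by (rewrite <- RtoC_mult; f_equal).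
  field. auto.
Qed.

Lemma hh_cont_x φ x : (0 < x)%R -> @continuous R_UniformSpace C_R_NormedModule (hh φ) x.
Proof.
  intros Hx. apply CDex_cont. eexists. unfold hh.
  apply CD_mult. apply CD_const. apply CD_mult. apply CD_rpowC; auto.
  apply CD_cexp. apply CD_mult. apply CD_RtoC. apply rd_mult. apply rd_const.
  apply (is_derive_id (K:=R_AbsRing)). apply CD_const.
Qed.

Lemma dd_cont_x φ x : (0 < x)%R -> @continuous R_UniformSpace C_R_NormedModule (dd φ) x.
Proof.
  intros Hx. apply CDex_cont. eexists. unfold dd, qq, hh.
  apply CD_mult. apply CD_plus. apply CD_const. apply CD_mult. apply CD_RtoC.
  apply rd_mult. apply rd_const. apply (is_derive_id (K:=R_AbsRing)). apply CD_const.
  apply CD_mult. apply CD_const. apply CD_mult. apply CD_rpowC; auto.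
  apply CD_cexp. apply CD_mult. apply CD_RtoC. apply rd_mult. apply rd_const.
  apply (is_derive_id (K:=R_AbsRing)). apply CD_const.
Qed.

Variable ε Rr : R.
Hypothesis Hε : (0 < ε)%R.
Hypothesis HεR : (ε < Rr)%R.

Definition Phi (φ : R) : C := CInt (hh φ) ε Rr.
Definition DPhi (φ : R) : C := Ci * (RtoC Rr * hh φ Rr) - Ci * (RtoC ε * hh φ ε).

Lemma ex_hh φ : ex_RInt (V:=C_R_CompleteNormedModule) (hh φ) ε Rr.
Proof. apply ex_RInt_continuous. intros z Hz. apply hh_cont_x. destruct Hz as [Hz _]. eapply Rlt_le_trans; [|exact Hz]. apply Rmin_glb_lt; lra. Qed.

Lemma ex_dd φ : ex_RInt (V:=C_R_CompleteNormedModule) (dd φ) ε Rr.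
Proof. apply ex_RInt_continuous. intros z Hz. apply dd_cont_x. destruct Hz as [Hz _]. eapply Rlt_le_trans; [|exact Hz]. apply Rmin_glb_lt; lra. Qed.

Lemma int_dd φ : CInt (dd φ) ε Rr = DPhi φ.
Proof.
  unfold CInt. apply (is_RInt_unique (V:=C_R_CompleteNormedModule)).
  unfold DPhi. apply (is_RInt_derive (V:=C_R_CompleteNormedModule) (fun y => Ci * (RtoC y * hh φ y))).
  - intros x Hx. apply CD_xhh. destruct Hx as [Hx _]. eapply Rlt_le_trans; [|exact Hx]. apply Rmin_glb_lt; lra.
  - intros x Hx. apply dd_cont_x. destruct Hx as [Hx _]. eapply Rlt_le_trans; [|exact Hx]. apply Rmin_glb_lt; lra.
Qed.

Lemma CD_Phi φ0 : CD Phi φ0 (DPhi φ0).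
Proof.
  rewrite <- int_dd. unfold Phi.
  set (Hb := (exp (Rabs (snd s) * (Rabs φ0 + 1)) * exp (fst s * ln Rr) * exp (ρ * Rr))%R).
  apply (param_deriv hh dd dd2 ε Rr φ0 ((ρ * Rr + (Cmod (s + 1) + ρ * Rr) ^ 2) * Hb)%R).
  - lra.
  - intros; apply CD_hh_φ.
  - intros; apply CD_dd_φ.
  - intros φ x Hφ Hx.
    assert (Hh : (Cmod (hh φ x) <= Hb)%R).
    { rewrite Cmod_hh by lra. unfold Hb. apply Rmult_le_compat. 
      apply Rmult_le_pos; left; apply exp_pos. left; apply exp_pos.
      apply Rmult_le_compat; try (left; apply exp_pos).
      apply exp_le. pose proof (Rabs_pos (snd s)).
      assert (Rabs φ <= Rabs φ0 + 1)%R. { pose proof (Rabs_triang_inv φ φ0). lra. }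
      pose proof (Rle_abs (- snd s * φ)). rewrite Rabs_mult, Rabs_Ropp in H1. nra.
      apply exp_le. apply Rmult_le_compat_l. lra. destruct (Req_dec x Rr) as [->|]. lra. left; apply ln_increasing; lra.
      apply exp_le. pose proof (COS_bound φ). assert (0 < ρ * x)%R by nra. assert (ρ * x <= ρ * Rr)%R by nra. nra. }
    assert (Hq : (Cmod (qq φ x) <= Cmod (s + 1) + ρ * Rr)%R).
    { unfold qq. eapply Rle_trans. apply Cmod_triangle. rewrite !Cmod_mult, Cmod_Ci, Cmod_ee, Cmod_R.
      rewrite Rabs_left1 by nra. nra. }
    unfold dd2, dd. eapply Rle_trans. apply Cmod_triangle. rewrite !Cmod_mult, !Cmod_Ci, Cmod_ee, Cmod_R.
    rewrite Rabs_left1 by nra.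
    pose proof (Cmod_ge_0 (hh φ x)). pose proof (Cmod_ge_0 (qq φ x)).
    assert (Cmod (qq φ x) * Cmod (qq φ x) <= (Cmod (s + 1) + ρ * Rr) ^ 2)%R by nra.
    assert (0 <= Hb)%R by (eapply Rle_trans; [apply Cmod_ge_0| exact Hh]).
    assert (- (- ρ * x) * (1 * (1 * 1)) <= ρ * Rr)%R by nra.
    assert (0 <= - (- ρ * x) * (1 * (1 * 1)))%R by nra.
    apply Rle_trans with ((ρ * Rr) * Hb + (Cmod (s + 1) + ρ * Rr) ^ 2 * Hb)%R; [|lra].
    apply Rplus_le_compat. apply Rmult_le_compat; auto.
    rewrite <- Rmult_assoc. apply Rmult_le_compat; auto. nra.
  - intros; apply ex_hh.
  - apply ex_dd.
Qed.

Lemma rotation θ : (ε <= 1)%R -> (- PI / 2 < θ < PI / 2)%R ->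
  (Cmod (Phi θ - Phi 0) <= 2 * (exp (Rabs (snd s) * Rabs θ) * (Rr * exp (fst s * ln Rr - ρ * Rr * cos θ) + ε)) * Rabs (θ - 0))%R.
Proof.
  intros Hε1 Hθ. apply (MVI Phi DPhi).
  - intros; apply CD_Phi.
  - intros φ Hφ. unfold DPhi.
    pose proof (cos_between θ φ Hθ Hφ) as Hc.
    assert (Hφθ : (Rabs φ <= Rabs θ)%R).
    { unfold Rmin, Rmax in Hφ. destruct (Rle_dec 0 θ); unfold Rabs; destruct (Rcase_abs φ), (Rcase_abs θ); lra. }
    assert (Hsφ : (- snd s * φ <= Rabs (snd s) * Rabs θ)%R).
    { pose proof (Rle_abs (- snd s * φ)). rewrite Rabs_mult, Rabs_Ropp in H. pose proof (Rabs_pos (snd s)). nra. }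
    eapply Rle_trans. apply Cmod_triangle. rewrite Cmod_opp, !Cmod_mult, !Cmod_Ci, !Cmod_R, !Cmod_hh by lra.
    rewrite !Rabs_right by lra.
    replace (1 * (Rr * (exp (- snd s * φ) * exp (fst s * ln Rr) * exp (- ρ * Rr * cos φ))))%R
      with (exp (- snd s * φ) * (Rr * exp (fst s * ln Rr - ρ * Rr * cos φ)))%R
      by (unfold Rminus; rewrite exp_plus; replace (- (ρ * Rr * cos φ))%R with (- ρ * Rr * cos φ)%R by ring; ring).
    rewrite Rmult_plus_distr_l.
    assert (H1 : (exp (- snd s * φ) <= exp (Rabs (snd s) * Rabs θ))%R) by (apply exp_le; auto).
    apply Rplus_le_compat.
    + apply Rmult_le_compat. left; apply exp_pos. apply Rmult_le_pos. lra. left; apply exp_pos. auto.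
      apply Rmult_le_compat_l. lra. apply exp_le. assert (0 < ρ * Rr)%R by nra. nra.
    + assert (Hl : (ln ε <= 0)%R). { rewrite <- ln_1. destruct (Req_dec ε 1) as [->|]. lra. left; apply ln_increasing; lra. }
      assert (exp (fst s * ln ε) <= 1)%R by (rewrite <- exp_0; apply exp_le; nra).
      assert (exp (- ρ * ε * cos φ) <= 1)%R.
      { rewrite <- exp_0; apply exp_le. assert (0 < cos θ)%R.
        { apply cos_gt_0; lra. } assert (0 < ρ * ε)%R by nra. nra. }
      pose proof (exp_pos (- snd s * φ)). pose proof (exp_pos (fst s * ln ε)). pose proof (exp_pos (- ρ * ε * cos φ)).
      replace (1 * (ε * (exp (- snd s * φ) * exp (fst s * ln ε) * exp (- ρ * ε * cos φ))))%R
        with (ε * exp (- snd s * φ) * (exp (fst s * ln ε) * exp (- ρ * ε * cos φ)))%R by ring.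
      assert (exp (fst s * ln ε) * exp (- ρ * ε * cos φ) <= 1)%R.
      { replace 1%R with (1 * 1)%R by ring. apply Rmult_le_compat; lra. }
      assert (ε * exp (- snd s * φ) <= ε * exp (Rabs (snd s) * Rabs θ))%R by (apply Rmult_le_compat_l; lra).
      apply Rle_trans with (ε * exp (- snd s * φ) * 1)%R. apply Rmult_le_compat_l; nra. lra.
Qed.

End Rot.


Lemma CInt_Cmult (c : C) (f g : R -> C) a b :
  ex_RInt (V:=C_R_CompleteNormedModule) f a b ->
  (forall x, (Rmin a b < x < Rmax a b)%R -> g x = c * f x) ->
  CInt g a b = c * CInt f a b.
Proof.
  intros Hex Hfg. unfold CInt. apply (is_RInt_unique (V:=C_R_CompleteNormedModule)).
  eapply is_RInt_ext. intros x Hx. symmetry. apply Hfg. exact Hx.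
  apply is_RInt_Cmult. apply (RInt_correct (V:=C_R_CompleteNormedModule)). exact Hex.
Qed.

Lemma ee0 : ee 0 = 1.
Proof. unfold ee. replace (Ci * RtoC 0) with (RtoC 0) by (apply injective_projections; simpl; ring). apply cexp_0. Qed.

Lemma RtoC_neg_mult (r x : R) : RtoC (- r * x) = - RtoC r * RtoC x.
Proof. apply injective_projections; simpl; ring. Qed.

Section Scale.
Variable s : C.
Variable ρ : R.
Hypothesis Hs : (1 <= fst s)%R.
Hypothesis Hρ : (0 < ρ)%R.
Variable ε Rr : R.
Hypothesis Hε : (0 < ε)%R.
Hypothesis HεR : (ε < Rr)%R.

Lemma Phi_theta θ :
  Phi s ρ ε Rr θ = cexp (Ci * (s + 1) * RtoC θ) * CInt (fun x => rpowC x s * cexp (- (RtoC ρ * ee θ) * RtoC x)) ε Rr.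
Proof.
  unfold Phi. apply CInt_Cmult.
  - apply ex_RInt_continuous. intros z Hz. apply CDex_cont. eexists.
    apply CD_mult. apply CD_rpowC. destruct Hz as [Hz _]. eapply Rlt_le_trans; [|exact Hz]. apply Rmin_glb_lt; lra.
    apply CD_cexp. apply CD_scal. apply CD_id.
  - intros x _. unfold hh. f_equal. f_equal. f_equal. rewrite RtoC_neg_mult. ring.
Qed.

Lemma Phi_zero :
  cexp ((s + 1) * RtoC (ln ρ)) * Phi s ρ ε Rr 0 = CInt (fun t => rpowC t s * RtoC (exp (- t))) (ρ * ε) (ρ * Rr).
Proof.
  set (Gm := fun t => rpowC t s * RtoC (exp (- t))).
  assert (Hex : forall u v, (0 < u)%R -> (0 < v)%R -> ex_RInt (V:=C_R_CompleteNormedModule) Gm u v).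
  { intros u v Hu Hv. apply ex_RInt_continuous. intros z Hz. apply CDex_cont. eexists.
    unfold Gm. apply CD_mult. apply CD_rpowC. destruct Hz as [Hz _]. eapply Rlt_le_trans; [|exact Hz]. apply Rmin_glb_lt; lra.
    apply CD_RtoC. apply rd_exp. apply (is_derive_opp (K:=R_AbsRing) (fun t => t)). apply (is_derive_id (K:=R_AbsRing)). }
  pose proof (RInt_comp_lin (V:=C_R_CompleteNormedModule) Gm ρ 0 ε Rr) as H.
  rewrite !Rplus_0_r in H. unfold CInt. rewrite <- H by (apply Hex; nra).
  symmetry. apply (CInt_Cmult (cexp ((s + 1) * RtoC (ln ρ))) (hh s ρ 0)).
  - apply ex_hh; auto.
  - intros y Hy. assert (Hy0 : (0 < y)%R). { destruct Hy as [Hy _]. eapply Rle_lt_trans; [|exact Hy]. apply Rmin_glb; lra. }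
    rewrite scal_C. unfold Gm, hh. rewrite Rplus_0_r, ee0.
    rewrite !rpowC_pos by nra. rewrite ln_mult by lra.
    rewrite <- (cexp_ln ρ) at 1 by lra. rewrite <- !cexp_R.
    replace (Ci * (s + 1) * RtoC 0) with (RtoC 0) by (apply injective_projections; simpl; ring).
    rewrite cexp_0. rewrite <- !cexp_add.
    replace (RtoC (- ρ * y) * 1) with (RtoC (- ρ * y)) by ring.
    rewrite Cmult_1_l, <- !cexp_add. f_equal. rewrite RtoC_plus, RtoC_neg_mult, RtoC_opp, RtoC_mult. ring.
Qed.
End Scale.


Lemma ex_RInt_Cmult (c : C) (f : R -> C) a b :
  ex_RInt (V:=C_R_CompleteNormedModule) f a b -> ex_RInt (V:=C_R_CompleteNormedModule) (fun x => c * f x) a b.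
Proof. intros [l H]. exists (c * l). apply is_RInt_Cmult. exact H. Qed.

Lemma ee_eq θ : ee θ = (cos θ, sin θ).
Proof. unfold ee, cexp. simpl. replace (0 * θ - 1 * 0)%R with 0%R by ring. replace (0 * 0 + 1 * θ)%R with θ by ring. rewrite exp_0. apply injective_projections; simpl; ring. Qed.

Lemma Cmod_le_of_ball (z y : C) (e : R) : @ball C_R_NormedModule z e y -> (Cmod (z - y) <= 2 * e)%R.
Proof.
  intros [H1 H2]. change (Rabs (fst y - fst z) < e)%R in H1. change (Rabs (snd y - snd z) < e)%R in H2.
  eapply Rle_trans. apply Cmod_le_sum. simpl.
  rewrite <- (Rabs_Ropp (fst z + - fst y)), <- (Rabs_Ropp (snd z + - snd y)).
  replace (- (fst z + - fst y))%R with (fst y - fst z)%R by ring.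
  replace (- (snd z + - snd y))%R with (snd y - snd z)%R by ring. lra.
Qed.

Section ClaimA.
Variables (n : R) (w v : C).
Hypothesis Hw : (1 <= fst w)%R.
Hypothesis Hn : (16 * (Rabs (fst v) + 1) <= n)%R.

Let s := RtoC n + v.
Let a := RtoC n * w.
Let P := cexp (- (RtoC n + v) * RtoC (ln n)) * cexp (- (RtoC n + v) * Clog w).
Let Γ := CGamma (RtoC n + v + 1).
Let jf := fun x => rpowC x (RtoC n + v) * cexp (- a * RtoC x).
Let ρ := (n * Cmod w)%R.
Let θ := Carg w.
Let Q := cexp (RtoC (ln ρ) - Ci * s * RtoC θ).

Lemma n_pos : (1 <= n)%R.
Proof. pose proof (Rabs_pos (fst v)). lra. Qed.

Lemma s_ge1 : (1 <= fst s)%R.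
Proof. unfold s. simpl. pose proof (Rle_abs (- fst v)). rewrite Rabs_Ropp in H. pose proof n_pos. lra. Qed.

Lemma w_pos : (0 < fst w)%R.
Proof. lra. Qed.

Lemma ρ_pos : (0 < ρ)%R.
Proof. unfold ρ. pose proof n_pos. pose proof (Cmod_pos_re w w_pos). nra. Qed.

Lemma E1 : RtoC ρ * ee θ = a.
Proof.
  rewrite ee_eq. unfold ρ, θ, a. pose proof (Cmod_cos_Carg w w_pos). pose proof (Cmod_sin_Carg w w_pos).
  apply injective_projections; simpl; [rewrite <- H | rewrite <- H0]; ring.
Qed.

Lemma a_cexp : a = cexp (RtoC (ln ρ) + Ci * RtoC θ).
Proof. rewrite <- E1, cexp_add, cexp_ln by apply ρ_pos. reflexivity. Qed.

Lemma E2 : a * cexp (- (Ci * (s + 1) * RtoC θ)) = Q.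
Proof. rewrite a_cexp, <- cexp_add. unfold Q. f_equal. ring. Qed.

Lemma E3 : P * cexp ((s + 1) * RtoC (ln ρ)) = Q.
Proof.
  unfold P, Q. rewrite <- !cexp_add. f_equal.
  assert (Hl : ln ρ = (ln n + ln (Cmod w))%R).
  { unfold ρ. apply ln_mult. pose proof n_pos; lra. apply Cmod_pos_re, w_pos. }
  assert (Hc : Clog w = RtoC (ln (Cmod w)) + Ci * RtoC θ).
  { unfold Clog. apply injective_projections; simpl; unfold θ; ring. }
  rewrite Hc, Hl, RtoC_plus. unfold s. ring.
Qed.

Lemma jf_ex u b : (0 <= u)%R -> (0 <= b)%R -> ex_RInt (V:=C_R_CompleteNormedModule) jf u b.
Proof.
  intros Hu Hb. eapply ex_RInt_ext. 2: apply (ex_RInt_Cmult (cexp (- a)) _ _ _ (ex_RInt_Gf n w v u b ltac:(pose proof s_ge1; unfold s in *; simpl in *; lra) Hu Hb)).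
  intros x _. change (@eq C (cexp (- a) * Gf n w v x) (jf x)). unfold jf, Gf. fold a.
  replace (a * RtoC (1 - x)) with (a + - a * RtoC x) by (rewrite RtoC_minus; ring).
  rewrite cexp_add.
  assert (E : cexp (- a) * cexp a = 1) by (rewrite <- cexp_add; replace (- a + a) with (RtoC 0) by ring; apply cexp_0).
  transitivity ((cexp (- a) * cexp a) * cexp (- a * RtoC x) * rpowC x (RtoC n + v)). ring.
  rewrite E. ring.
Qed.

Lemma jf_small x : (0 <= x <= 1/2)%R -> (Cmod (jf x) <= 1)%R.
Proof.
  intros Hx. destruct (Req_dec x 0) as [->|Hx0].
  - unfold jf. rewrite rpowC_nonpos by lra. rewrite Cmult_0_l, Cmod_0. lra.
  - unfold jf. rewrite Cmod_mult. replace 1%R with (1 * 1)%R by ring.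
    apply Rmult_le_compat; try apply Cmod_ge_0.
    + eapply Rle_trans. apply rpowC_small. lra. apply s_ge1. lra.
    + rewrite Cmod_cexp. rewrite <- exp_0. apply exp_le. unfold a. simpl. pose proof n_pos. assert (0 <= n * fst w)%R by nra. nra.
Qed.

Lemma claimA (η : R) : (0 < η)%R -> exists Rr, (exp 2 <= Rr)%R /\ (Cmod (P * Γ - a * CInt jf 0 Rr) <= η)%R.
Proof.
  intros Hη.
  pose proof ρ_pos as Hρ. pose proof s_ge1 as Hs.
  pose proof (Carg_bound w w_pos) as Hθ. fold θ in Hθ.
  pose proof (cos_Carg_pos w w_pos) as Hcos. fold θ in Hcos.
  assert (Hθ2 : (Rabs θ <= 2)%R). { pose proof PI_4. unfold Rabs; destruct (Rcase_abs θ); lra. }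
  set (cP := (Cmod P + 1)%R). set (cQ := ((Cmod Q + 1) * (4 * exp (Rabs (snd s) * 2)))%R).
  set (ca := (Cmod a + 1)%R).
  assert (HcP : (0 < cP)%R) by (unfold cP; pose proof (Cmod_ge_0 P); lra).
  assert (HcQ : (0 < cQ)%R) by (unfold cQ; pose proof (Cmod_ge_0 Q); pose proof (exp_pos (Rabs (snd s) * 2)); nra).
  assert (Hca : (0 < ca)%R) by (unfold ca; pose proof (Cmod_ge_0 a); lra).
  assert (HG := CGamma_is (RtoC n + v + 1) ltac:(simpl; unfold s in Hs; simpl in Hs; lra)).
  replace (RtoC n + v + 1 - 1) with s in HG by (unfold s; ring).
  fold Γ in HG.
  assert (He1 : (0 < η / (6 * cP))%R) by (apply Rdiv_lt_0_compat; lra).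
  destruct (HG (ball Γ (η / (6 * cP)))) as [Pa Pb HPa HPb HPab].
  { exists (mkposreal _ He1). auto. }
  destruct HPa as [δ Hδ]. destruct HPb as [Mb HMb].
  set (ε := Rmin (Rmin (1/2) (δ / (2 * ρ))) (Rmin (η / (6 * cQ)) (η / (3 * ca)))).
  assert (Hεpos : (0 < ε)%R).
  { unfold ε. repeat apply Rmin_pos; try lra; apply Rdiv_lt_0_compat; try lra. apply cond_pos. }
  assert (Hε1 : (ε <= 1/2)%R) by (unfold ε; eapply Rle_trans; [apply Rmin_l| apply Rmin_l]).
  assert (Hε2 : (ε <= δ / (2 * ρ))%R) by (unfold ε; eapply Rle_trans; [apply Rmin_l| apply Rmin_r]).
  assert (Hε3 : (ε <= η / (6 * cQ))%R) by (unfold ε; eapply Rle_trans; [apply Rmin_r| apply Rmin_l]).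
  assert (Hε4 : (ε <= η / (3 * ca))%R) by (unfold ε; eapply Rle_trans; [apply Rmin_r| apply Rmin_r]).
  set (c := (ρ * cos θ)%R).
  assert (Hc : (0 < c)%R) by (unfold c; nra).
  set (σ1 := (fst s + 1)%R).
  set (τ := (η / (6 * cQ))%R).
  assert (Hτ : (0 < τ)%R) by (unfold τ; apply Rdiv_lt_0_compat; lra).
  set (C3 := (σ1 * (ln (2 * σ1) - 1) - σ1 * ln c)%R).
  set (Rr := Rmax (exp 2) (Rmax ((Rabs Mb + 1) / ρ) (2 * (Rabs (C3 - ln τ) + 1) / c))).
  assert (HR1 : (exp 2 <= Rr)%R) by apply Rmax_l.
  assert (HR2 : ((Rabs Mb + 1) / ρ <= Rr)%R) by (eapply Rle_trans; [apply Rmax_l| apply Rmax_r]).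
  assert (HR3 : (2 * (Rabs (C3 - ln τ) + 1) / c <= Rr)%R) by (eapply Rle_trans; [apply Rmax_r| apply Rmax_r]).
  assert (He2 : (1 < exp 2)%R) by (rewrite <- exp_0; apply exp_increasing; lra).
  exists Rr. split; auto.
  assert (HεR : (ε < Rr)%R) by lra.
  assert (Hin : Pa (ρ * ε)%R /\ Pb (ρ * Rr)%R).
  { split.
    - apply Hδ. change (Rabs (ρ * ε - 0) < δ)%R. rewrite Rminus_0_r, Rabs_right by nra.
      apply Rle_lt_trans with (ρ * (δ / (2 * ρ)))%R. apply Rmult_le_compat_l; lra.
      replace (ρ * (δ / (2 * ρ)))%R with (δ / 2)%R by (field; lra). pose proof (cond_pos δ). lra.
      nra.
    - apply HMb. apply Rmult_le_compat_l with (r := ρ) in HR2; [|lra].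
      replace (ρ * ((Rabs Mb + 1) / ρ))%R with (Rabs Mb + 1)%R in HR2 by (field; lra).
      pose proof (Rle_abs Mb). lra. }
  destruct (HPab _ _ (proj1 Hin) (proj2 Hin)) as [y [Hy1 Hy2]].
  simpl in Hy1.
  set (I := CInt (fun t => rpowC t s * RtoC (exp (- t))) (ρ * ε) (ρ * Rr)).
  assert (HyI : y = I).
  { symmetry. unfold I, CInt. apply (is_RInt_unique (V:=C_R_CompleteNormedModule)). exact Hy1. }
  subst y.
  assert (HGI : (Cmod (Γ - I) <= 2 * (η / (6 * cP)))%R) by (apply Cmod_le_of_ball; exact Hy2).
  pose proof (rotation s ρ Hs Hρ ε Rr Hεpos HεR θ ltac:(lra) Hθ) as Hrot.
  pose proof (Phi_zero s ρ Hρ ε Rr Hεpos HεR) as HP0. fold I in HP0.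
  pose proof (Phi_theta s ρ ε Rr Hεpos HεR θ) as HPt. rewrite E1 in HPt.
  assert (HjR : CInt jf 0 Rr = CInt jf 0 ε + CInt jf ε Rr).
  { unfold CInt. rewrite <- (RInt_Chasles (V:=C_R_CompleteNormedModule) jf 0 ε Rr) by (apply jf_ex; lra). reflexivity. }
  assert (Hdec : P * Γ - a * CInt jf 0 Rr = P * (Γ - I) + Q * (Phi s ρ ε Rr 0 - Phi s ρ ε Rr θ) - a * CInt jf 0 ε).
  { rewrite HjR.
    replace (Q * (Phi s ρ ε Rr 0 - Phi s ρ ε Rr θ)) with (Q * Phi s ρ ε Rr 0 - Q * Phi s ρ ε Rr θ) by ring.
    rewrite <- E3 at 1. rewrite <- E2.
    replace (P * cexp ((s + 1) * RtoC (ln ρ)) * Phi s ρ ε Rr 0) with (P * I) by (rewrite <- HP0; ring).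
    rewrite HPt.
    assert (HJ : CInt (fun x : R => rpowC x s * cexp (- a * RtoC x)) ε Rr = CInt jf ε Rr) by reflexivity.
    rewrite HJ.
    assert (Ecx : forall z, cexp (- z) * cexp z = 1).
    { intros z. rewrite <- cexp_add. replace (- z + z) with (RtoC 0) by ring. apply cexp_0. }
    set (X := Ci * (s + 1) * RtoC θ).
    transitivity (P * (Γ - I) + (P * I - a * (cexp (- X) * cexp X) * CInt jf ε Rr) - a * CInt jf 0 ε).
    2: ring.
    rewrite Ecx. ring. }
  rewrite Hdec.
  assert (B1 : (Cmod (P * (Γ - I)) <= η / 3)%R).
  { rewrite Cmod_mult. apply Rle_trans with (cP * (2 * (η / (6 * cP))))%R.
    apply Rmult_le_compat. apply Cmod_ge_0. apply Cmod_ge_0. unfold cP; lra. exact HGI.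
    right. field. lra. }
  assert (Hexp : (Rr * exp (fst s * ln Rr - ρ * Rr * cos θ) <= τ)%R).
  { assert (HRpos : (0 < Rr)%R) by lra.
    rewrite <- (exp_ln Rr) at 1 by lra. rewrite <- exp_plus.
    rewrite <- (exp_ln τ) by lra. apply exp_le.
    assert (Hb : (σ1 * ln (c * Rr) <= c * Rr / 2 + σ1 * (ln (2 * σ1) - 1))%R).
    { apply ln_bound_lin. unfold σ1; lra. nra. }
    rewrite ln_mult in Hb by lra.
    assert (Hcr : (2 * (Rabs (C3 - ln τ) + 1) <= c * Rr)%R).
    { apply Rmult_le_compat_l with (r := c) in HR3; [|lra].
      replace (c * (2 * (Rabs (C3 - ln τ) + 1) / c))%R with (2 * (Rabs (C3 - ln τ) + 1))%R in HR3 by (field; lra). lra. }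
    pose proof (Rle_abs (C3 - ln τ)). unfold C3, σ1 in *. unfold c in *. nra. }
  assert (B2 : (Cmod (Q * (Phi s ρ ε Rr 0 - Phi s ρ ε Rr θ)) <= η / 3)%R).
  { rewrite Cmod_mult.
    replace (Phi s ρ ε Rr 0 - Phi s ρ ε Rr θ) with (- (Phi s ρ ε Rr θ - Phi s ρ ε Rr 0)) by ring.
    rewrite Cmod_opp. rewrite Rminus_0_r in Hrot.
    assert (Hx : (exp (Rabs (snd s) * Rabs θ) <= exp (Rabs (snd s) * 2))%R).
    { apply exp_le. apply Rmult_le_compat_l. apply Rabs_pos. lra. }
    assert (Hrot2 : (Cmod (Phi s ρ ε Rr θ - Phi s ρ ε Rr 0) <= 4 * exp (Rabs (snd s) * 2) * (2 * τ))%R).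
    { eapply Rle_trans. exact Hrot.
      pose proof (exp_pos (Rabs (snd s) * Rabs θ)). pose proof (Rabs_pos θ).
      assert (0 <= Rr * exp (fst s * ln Rr - ρ * Rr * cos θ))%R by (apply Rmult_le_pos; [lra| left; apply exp_pos]).
      assert (Rr * exp (fst s * ln Rr - ρ * Rr * cos θ) + ε <= 2 * τ)%R by (unfold τ in *; lra).
      apply Rle_trans with (2 * (exp (Rabs (snd s) * 2) * (2 * τ)) * 2)%R.
      apply Rmult_le_compat; try lra. apply Rmult_le_pos; try lra. apply Rmult_le_pos; try lra.
      apply Rmult_le_compat_l. lra. apply Rmult_le_compat; lra. right; ring. }
    apply Rle_trans with ((Cmod Q + 1) * (4 * exp (Rabs (snd s) * 2) * (2 * τ)))%R.
    apply Rmult_le_compat; try apply Cmod_ge_0; try lra.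
    unfold τ. fold cQ. right. unfold cQ. field. split. pose proof (exp_pos (Rabs (snd s) * 2)). lra.
    pose proof (Cmod_ge_0 Q). lra. }
  assert (B3 : (Cmod (a * CInt jf 0 ε) <= η / 3)%R).
  { rewrite Cmod_mult.
    assert (HI : (Cmod (CInt jf 0 ε) <= (ε - 0) * 1)%R).
    { apply CInt_bound. lra. apply jf_ex; lra. intros x Hx. apply jf_small. lra. }
    apply Rle_trans with (ca * (η / (3 * ca)))%R.
    apply Rmult_le_compat. apply Cmod_ge_0. apply Cmod_ge_0. unfold ca; lra. lra.
    right. field. lra. }
  eapply Rle_trans. apply Cmod_triangle. rewrite Cmod_opp.
  eapply Rle_trans. apply Rplus_le_compat_r. apply Cmod_triangle. lra.
Qed.

End ClaimA.


Lemma le_eps x B : (forall η, (0 < η)%R -> (x <= η + B)%R) -> (x <= B)%R.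
Proof.
  intros H. destruct (Rle_dec x B); auto. exfalso.
  pose proof (H ((x - B) / 2)%R ltac:(lra)). lra.
Qed.

Lemma exp2_ge4 : (4 <= exp 2)%R.
Proof.
  replace 2%R with (1 + 1)%R by ring. rewrite exp_plus.
  pose proof (exp_ineq1_le 1). nra.
Qed.

Theorem partT : forall w v : C, (1 <= Re w)%R ->
     exists K N : R, forall n : R, (N <= n)%R ->
       (Cmod (T_n n w v - (RtoC n + v) * CInt (integrand n w v) 0 2)
          <= K * exp (- n / 2))%R.
Proof.
  intros w v Hw. unfold Re in Hw.
  exists (4 * Cmod w + exp (2 * fst v))%R, (16 * (Rabs (fst v) + 1))%R.
  intros n Hn.
  pose proof (Rle_abs (fst v)). pose proof (Rle_abs (- fst v)). rewrite Rabs_Ropp in *.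
  pose proof (Rabs_pos (fst v)).
  assert (Hn1 : (1 <= n)%R) by lra.
  assert (Hs : (1 <= n + fst v)%R) by lra.
  pose proof exp2_ge4 as He2.
  set (a := RtoC n * w).
  set (P := cexp (- (RtoC n + v) * RtoC (ln n)) * cexp (- (RtoC n + v) * Clog w)).
  set (Γ := CGamma (RtoC n + v + 1)).
  set (jf := fun x => rpowC x (RtoC n + v) * cexp (- a * RtoC x)).
  assert (HT : T_n n w v = cexp a * P * Γ - S_n n w v).
  { unfold T_n. fold a. unfold P, Γ. ring. }
  rewrite HT, key_identity, exp_0, uu0, cexp_0.
  set (B := (4 * Cmod w * exp (- n / 2) + exp (2 * fst v) * exp (- n / 2))%R).
  replace ((4 * Cmod w + exp (2 * fst v)) * exp (- n / 2))%R with B by (unfold B; ring).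
  apply le_eps. intros η Hη.
  set (ca := (Cmod (cexp a) + 1)%R).
  assert (Hca : (0 < ca)%R) by (unfold ca; pose proof (Cmod_ge_0 (cexp a)); lra).
  destruct (claimA n w v Hw ltac:(lra) (η / ca)%R ltac:(apply Rdiv_lt_0_compat; lra)) as [Rr [HR HA]].
  fold a P Γ jf in HA.
  assert (HGj : CInt (Gf n w v) 0 Rr = cexp a * CInt jf 0 Rr).
  { apply CInt_Cmult. apply jf_ex; lra.
    intros x _. unfold Gf, jf. fold a.
    replace (a * RtoC (1 - x)) with (a + - a * RtoC x) by (rewrite RtoC_minus; ring).
    rewrite cexp_add. ring. }
  assert (HCh : CInt (Gf n w v) 0 Rr = CInt (Gf n w v) 0 1 + CInt (Gf n w v) 1 (exp 2) + CInt (Gf n w v) (exp 2) Rr).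
  { unfold CInt. rewrite <- (RInt_Chasles (V:=C_R_CompleteNormedModule) _ 0 (exp 2) Rr) by (apply ex_RInt_Gf; lra).
    rewrite <- (RInt_Chasles (V:=C_R_CompleteNormedModule) _ 0 1 (exp 2)) by (apply ex_RInt_Gf; lra).
    reflexivity. }
  assert (Herr : cexp a * P * Γ - S_n n w v - (cexp (uu n w v 2) - 1 + RtoC n * w * CInt (Gf n w v) 1 (exp 2))
     = cexp a * (P * Γ - a * CInt jf 0 Rr) + a * CInt (Gf n w v) (exp 2) Rr - cexp (uu n w v 2)).
  { unfold S_n. fold a.
    change (CInt (fun z : R => cexp (a * RtoC (1 - z)) * rpowC z (RtoC n + v)) 0 1) with (CInt (Gf n w v) 0 1).
    assert (E : cexp a * (a * CInt jf 0 Rr) = a * CInt (Gf n w v) 0 Rr) by (rewrite HGj; ring).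
    transitivity (cexp a * P * Γ - a * CInt (Gf n w v) 0 Rr + a * CInt (Gf n w v) (exp 2) Rr - cexp (uu n w v 2)).
    rewrite HCh. ring. rewrite <- E. ring. }
  rewrite Herr.
  assert (Htail : (Cmod (CInt (Gf n w v) (exp 2) Rr) <= exp (- (3/4) * n) / 1 * exp (- 1 * exp 2))%R).
  { apply tail_bound. lra. exact HR. apply ex_RInt_Gf; lra.
    intros t Ht. unfold Gf. rewrite Cmod_mult, Cmod_cexp_Gpart, Cmod_rpowC by lra.
    rewrite <- !exp_plus. apply exp_le. simpl.
    assert (Hlt : (ln t <= 1 + t / 4)%R).
    { assert (E : ln t = (ln (t / exp 2) + 2)%R).
      { rewrite ln_div, ln_exp by (try lra; apply exp_pos). ring. }
      pose proof (ln_le_sub1 (t / exp 2) ltac:(apply Rdiv_lt_0_compat; [lra| apply exp_pos])).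
      assert (t / exp 2 <= t / 4)%R. { unfold Rdiv. apply Rmult_le_compat_l. lra. apply Rinv_le_contravar; lra. }
      lra. }
    assert (Hl0 : (0 <= ln t)%R). { rewrite <- ln_1. left. apply ln_increasing; lra. }
    assert (Hlt2 : (ln t <= t)%R). { pose proof (ln_le_sub1 t ltac:(lra)). lra. }
    assert (G0 : (0 <= n * (fst w - 1))%R) by nra.
    assert (G1 : (n * fst w * (1 - t) <= n * (1 - t))%R) by nra.
    assert (G2 : (fst v * ln t <= Rabs (fst v) * t)%R) by nra.
    assert (G3 : (n * ln t <= n * (1 + t / 4))%R) by nra.
    assert (G4 : ((1 + Rabs (fst v)) * t <= n / 16 * t)%R) by nra.
    nra. }
  assert (HT1 : (Cmod (a * CInt (Gf n w v) (exp 2) Rr) <= 4 * Cmod w * exp (- n / 2))%R).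
  { unfold a. rewrite Cmod_mult, Cmod_mult, Cmod_R, Rabs_right by lra.
    assert (exp (- 1 * exp 2) <= 1)%R by (rewrite <- exp_0; apply exp_le; lra).
    assert (Hq : (Cmod (CInt (Gf n w v) (exp 2) Rr) <= exp (- (3/4) * n))%R).
    { eapply Rle_trans. exact Htail. pose proof (exp_pos (- (3/4) * n)). rewrite Rdiv_1_r. nra. }
    assert (Hn4 : (n * exp (- (3/4) * n) <= 4 * exp (- n / 2))%R).
    { replace (exp (- (3/4) * n)) with (exp (- n / 4) * exp (- n / 2))%R by (rewrite <- exp_plus; f_equal; field).
      pose proof (exp_ineq1_le (n/4)).
      assert (exp (- n / 4) * exp (n / 4) = 1)%R by (rewrite <- exp_plus, <- exp_0; f_equal; field).
      pose proof (exp_pos (- n / 4)). pose proof (exp_pos (- n / 2)).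
      assert (n / 4 * exp (- n / 4) <= (exp (n / 4) - 1) * exp (- n / 4))%R by (apply Rmult_le_compat_r; lra).
      assert (n * exp (- n / 4) <= 4)%R by nra.
      nra. }
    pose proof (Cmod_ge_0 w). pose proof (Cmod_ge_0 (CInt (Gf n w v) (exp 2) Rr)).
    apply Rle_trans with (n * Cmod w * exp (- (3/4) * n))%R. apply Rmult_le_compat_l; nra.
    nra. }
  assert (HT2 : (Cmod (cexp (uu n w v 2)) <= exp (2 * fst v) * exp (- n / 2))%R).
  { rewrite Cmod_cexp. rewrite <- exp_plus. apply exp_le. unfold uu, ptilde. simpl.
    assert (fst w * (1 - exp 2) <= 1 - exp 2)%R by nra. nra. }
  assert (HT3 : (Cmod (cexp a * (P * Γ - a * CInt jf 0 Rr)) <= η)%R).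
  { rewrite Cmod_mult. apply Rle_trans with (ca * (η / ca))%R.
    apply Rmult_le_compat; try apply Cmod_ge_0. unfold ca; lra. exact HA.
    right. field. lra. }
  eapply Rle_trans. apply Cmod_triangle. rewrite Cmod_opp.
  eapply Rle_trans. apply Rplus_le_compat_r. apply Cmod_triangle. unfold B. lra.
Qed.


Theorem lemma6p1 :
  (forall w v : C, (Re w <= 1)%R ->
     exists K N : R, forall n : R, (N <= n)%R ->
       (Cmod (S_n n w v - (RtoC n + v) * CInt (integrand n w v) (-2) 0)
          <= K * exp (- n / 2))%R)
  /\
  (forall w v : C, (1 <= Re w)%R ->
     exists K N : R, forall n : R, (N <= n)%R ->
       (Cmod (T_n n w v - (RtoC n + v) * CInt (integrand n w v) 0 2)
          <= K * exp (- n / 2))%R).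
Proof.
  split. exact partS. exact partT.
Qed.
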